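(* Assume Conditions A, B and C. Then there exists $(y_0^*,z_0^* )\in\mathcal R$ with $F_0(y_0^*,z_0^* )=F_0^*=\inf\{F_0(y,z):(y,z)\in\overline{\mathcal R}\}$.
   Context: Setting. $\mathcal I=(a,b)$, $-\infty\le a<b\le\infty$; $\mu,\sigma$ continuous on $\mathcal I$, $\sigma\neq0$; $X_0$ the regular diffusion $dX_0=\mu(X_0)dt+\sigma(X_0)dW$, $X_0(0)=x_0\in\mathcal I$. Scale density $s(x)=\exp(-\int^x2\mu/\sigma^2)$, scale function $S=\int s$, $S[y,z]=S(z)-S(y)$ ($dS$), speed density $m=1/(\sigma^2s)$, speed measure $M[y,z]=\int_y^z m$ ($dM$). Feller boundary classification; attainable means regular or exit. Condition A: $S(a,x]<\infty$, $S[x,b)=\infty$ for $x\in\mathcal I$ (so $a$ is regular/exit/natural, $b$ natural/entrance); if $a$ reflecting, $\lim_{x\to a}s(x)M[x,b)<\infty$; if $b$ natural, $M[y,b)<\infty$ for $y\in\mathcal I$; infinite boundaries are natural. $\mathcal E$ is $\mathcal I$ with $a$ added if attainable and $b$ added if entrance; $\mathcal R=\{(y,z)\in\mathcal E^2:y<z\}$, $\overline{\mathcal R}=\{(y,z)\in\mathcal E^2:y\le z\}$. Condition B: (a) $c_0:\mathcal E\to[0,\infty)$ continuous; at natural boundaries $c_0(a)=\lim_{x\to a}c_0(x)$, $c_0(b)=\lim_{x\to b}c_0(x)$ exist in $[0,\infty]$, with $c_0(\pm\infty)=\infty$ at infinite boundaries; $\int_y^bc_0\,dM<\infty$ for $y\in\mathcal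 I$; if $a$ reflecting, $\lim_{x\to a}s(x)\int_x^bc_0\,dM<\infty$. (b) $c_1:\overline{\mathcal R}\to[0,\infty]$ continuous, $c_1\ge k_1>0$, $c_1(\cdot,z)$ is $C^1$ near $a$ for $z\in\mathcal E\setminus\{a\}$, $c_1(y,\cdot)$ is $C^1$ near $b$ for $y\in\mathcal E\setminus\{b\}$. Functions: $g_0(x)=\int_{x_0}^x\int_u^b2c_0(v)\,dM(v)\,dS(u)$, $\zeta(x)=\int_{x_0}^x2M[u,b)\,dS(u)$ on $\mathcal I$, extended by continuity (possibly to $\pm\infty$). $F_0(y,z)=\frac{c_1(y,z)+g_0(z)-g_0(y)}{\zeta(z)-\zeta(y)}$ for $(y,z)\in\mathcal R$, $F_0(y,y)=\infty$, $F_0^*=\inf_{\overline{\mathcal R}}F_0$. Condition C: (a) $a$ is regular or exit, or $a$ is natural and either (i) $c_0(a)=\infty$, or (ii) $c_0(a)<\infty$, for each $z\in\mathcal E$ there is $y_z>a$ such that $\frac{-\partial_yc_1(y,z)+g_0'(y)}{\zeta'(y)}>F_0(y,z)$ for all $a<y<y_z$, and there is $(\hat y,\hat z)\in\mathcal R$ with $F_0(\hat y,\hat z)<c_0(a)$; (b) $b$ is entrance, or $b$ is natural and either (i) $c_0(b)=\infty$, or (ii) $c_0(b)<\infty$, for each $y\in\mathcal E$ there is $z_y<b$ such that $\frac{\partial_zc_1(y,z)+g_0'(z)}{\zeta'(z)}>F_0(y,z)$ for all $z_y<z<b$, and there is $(\tilde y,\tilde z)\in\mathcal R$ with $F_0(\tilde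 y,\tilde z)<c_0(b)$. *)

(* Defs.v *)
From Stdlib Require Import Reals ClassicalEpsilon.
Open Scope R_scope.

(* Nonnegative extended reals [0,+oo] are represented by Fin r | PInf. *)
Inductive Rbar : Type := Fin (r : R) | PInf.

Definition Rbar_le (x y : Rbar) : Prop :=
  match x, y with
  | _, PInf => True
  | PInf, Fin _ => False
  | Fin r, Fin s => r <= s
  end.

Definition Rbar_lt (x y : Rbar) : Prop :=
  match x, y with
  | Fin r, Fin s => r < s
  | Fin _, PInf => True
  | PInf, _ => False
  end.

(* real part (only used where the value is known to be finite) *)
Definition Rbar_real (x : Rbar) : R := match x with Fin r => r | PInf => 0 end.

(* Total oriented Riemann integral: the Stdlib RiemannInt when f is
   Riemann integrable between x and y, and 0 otherwise. *)
Definition Rint (f : R -> R) (x y : R) : R :=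
  match excluded_middle_informative (inhabited (Riemann_integrable f x y)) with
  | left H => RiemannInt (epsilon H (fun _ => True))
  | right _ => 0
  end.

Section Setting.
(* Endpoints of I = (a,b): a = None means a = -oo, b = None means b = +oo. *)
Variables (a b : option R).

Definition gtA (x : R) : Prop := match a with Some a' => a' < x | None => True end.
Definition ltB (x : R) : Prop := match b with Some b' => x < b' | None => True end.
Definition inI (x : R) : Prop := gtA x /\ ltB x.

Definition near_a (P : R -> Prop) : Prop :=
  exists w, inI w /\ forall x, gtA x -> x < w -> P x.
Definition near_b (P : R -> Prop) : Prop :=
  exists w, inI w /\ forall x, w < x -> ltB x -> P x.

Definition lim_a (f : R -> R) (L : R) : Prop :=
  forall eps, 0 < eps -> near_a (fun x => Rabs (f x - L) < eps).
Definition lim_b (f : R -> R) (L : R) : Prop :=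
  forall eps, 0 < eps -> near_b (fun x => Rabs (f x - L) < eps).
Definition lim_a_bar (f : R -> R) (L : Rbar) : Prop :=
  match L with Fin l => lim_a f l | PInf => forall K, near_a (fun x => K < f x) end.
Definition lim_b_bar (f : R -> R) (L : Rbar) : Prop :=
  match L with Fin l => lim_b f l | PInf => forall K, near_b (fun x => K < f x) end.

(* Improper integrals  int_y^b f  and  int_a^x f  (finiteness, value). *)
Definition Ib_fin (f : R -> R) (y : R) : Prop := exists L, lim_b (fun z => Rint f y z) L.
Definition Ib (f : R -> R) (y : R) : R :=
  epsilon (inhabits 0) (fun L => lim_b (fun z => Rint f y z) L).
Definition Ia_fin (f : R -> R) (x : R) : Prop := exists L, lim_a (fun y => Rint f y x) L.

Variables (mu sigma : R -> R) (x0 : R).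

Definition sdens (x : R) : R :=
  exp (- Rint (fun u => 2 * mu u / (sigma u) ^ 2) x0 x).
Definition mdens (x : R) : R := / ((sigma x) ^ 2 * sdens x).

(* Feller boundary classification (Karlin-Taylor tests, reference point x0):
   Sigma(a) = int_a^x0 M[u,x0] dS(u),  N(a) = int_a^x0 S[u,x0] dM(u),
   Sigma(b) = int_x0^b M[x0,u] dS(u),  N(b) = int_x0^b S[x0,u] dM(u). *)
Definition SigA : Prop := Ia_fin (fun u => Rint mdens u x0 * sdens u) x0.
Definition NA : Prop := Ia_fin (fun u => Rint sdens u x0 * mdens u) x0.
Definition SigB : Prop := Ib_fin (fun u => Rint mdens x0 u * sdens u) x0.
Definition NB : Prop := Ib_fin (fun u => Rint sdens x0 u * mdens u) x0.

Definition regular_a := SigA /\ NA.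
Definition exit_a := SigA /\ ~ NA.
Definition entrance_a := ~ SigA /\ NA.
Definition natural_a := ~ SigA /\ ~ NA.
Definition regular_b := SigB /\ NB.
Definition exit_b := SigB /\ ~ NB.
Definition entrance_b := ~ SigB /\ NB.
Definition natural_b := ~ SigB /\ ~ NB.
Definition attainable_a := regular_a \/ exit_a.

Definition inE (p : R) : Prop :=
  inI p \/ (a = Some p /\ attainable_a) \/ (b = Some p /\ entrance_b).
Definition inRbar (y z : R) : Prop := inE y /\ inE z /\ y <= z.
Definition inRr (y z : R) : Prop := inE y /\ inE z /\ y < z.

Definition setting : Prop :=
  (match a, b with Some a', Some b' => a' < b' | _, _ => True end) /\
  inI x0 /\
  (forall x, inI x -> continuity_pt mu x /\ continuity_pt sigma x /\ sigma x <> 0).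

(* refl : a is a regular boundary with reflecting boundary behaviour *)
Variable refl : Prop.

Definition condA : Prop :=
  (forall x, inI x -> Ia_fin sdens x) /\
  (forall x, inI x -> ~ Ib_fin sdens x) /\
  (refl -> regular_a /\ exists L, lim_a (fun x => sdens x * Ib mdens x) L) /\
  (natural_b -> forall y, inI y -> Ib_fin mdens y) /\
  (a = None -> natural_a) /\ (b = None -> natural_b).

Variables (c0 : R -> R) (c0a c0b : Rbar) (c1 : R -> R -> Rbar) (k1 : R).

Definition condB : Prop :=
  (forall x, inE x -> 0 <= c0 x) /\
  (forall p, inE p -> limit1_in c0 inE (c0 p) p) /\
  (natural_a -> lim_a_bar c0 c0a) /\ (natural_b -> lim_b_bar c0 c0b) /\
  (a = None -> c0a = PInf) /\ (b = None -> c0b = PInf) /\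
  (forall y, inI y -> Ib_fin (fun v => c0 v * mdens v) y) /\
  (refl -> exists L, lim_a (fun x => sdens x * Ib (fun v => c0 v * mdens v) x) L) /\
  0 < k1 /\
  (forall y z, inRbar y z -> Rbar_le (Fin k1) (c1 y z)) /\
  (forall y z, inRbar y z ->
     match c1 y z with
     | Fin r => forall eps, 0 < eps -> exists del, 0 < del /\
          forall y' z', inRbar y' z' -> Rabs (y' - y) < del -> Rabs (z' - z) < del ->
            exists r', c1 y' z' = Fin r' /\ Rabs (r' - r) < eps
     | PInf => forall K, exists del, 0 < del /\
          forall y' z', inRbar y' z' -> Rabs (y' - y) < del -> Rabs (z' - z) < del ->
            Rbar_lt (Fin K) (c1 y' z')
     end) /\
  (forall z, inE z -> a <> Some z ->
     exists w, gtA w /\ w <= z /\ exists d : R -> R,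
       forall y, gtA y -> y < w ->
         (exists r, c1 y z = Fin r) /\
         derivable_pt_lim (fun t => Rbar_real (c1 t z)) y (d y) /\ continuity_pt d y) /\
  (forall y, inE y -> b <> Some y ->
     exists w, ltB w /\ y <= w /\ exists d : R -> R,
       forall z, w < z -> ltB z ->
         (exists r, c1 y z = Fin r) /\
         derivable_pt_lim (fun t => Rbar_real (c1 y t)) z (d z) /\ continuity_pt d z).

Definition g0 (x : R) : R :=
  Rint (fun u => Ib (fun v => 2 * c0 v * mdens v) u * sdens u) x0 x.
Definition zeta (x : R) : R :=
  Rint (fun u => 2 * Ib mdens u * sdens u) x0 x.

Definition extv (f : R -> R) (p : R) : R :=
  match excluded_middle_informative (inI p) with
  | left _ => f p
  | right _ => epsilon (inhabits 0) (fun L => limit1_in f inI L p)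
  end.

Definition F0 (y z : R) : Rbar :=
  match Rlt_dec y z with
  | left _ =>
      match c1 y z with
      | Fin c => Fin ((c + extv g0 z - extv g0 y) / (extv zeta z - extv zeta y))
      | PInf => PInf
      end
  | right _ => PInf
  end.

Definition condC : Prop :=
  ((regular_a \/ exit_a) \/
   (natural_a /\
    (c0a = PInf \/
     exists c, c0a = Fin c /\
       (forall z, inE z -> exists yz, gtA yz /\
          forall y, gtA y -> y < yz -> y < z ->
            exists dc dg dz,
              derivable_pt_lim (fun t => Rbar_real (c1 t z)) y dc /\
              derivable_pt_lim g0 y dg /\ derivable_pt_lim zeta y dz /\
              Rbar_lt (F0 y z) (Fin ((- dc + dg) / dz))) /\
       exists yh zh, inRr yh zh /\ Rbar_lt (F0 yh zh) (Fin c)))) /\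
  (entrance_b \/
   (natural_b /\
    (c0b = PInf \/
     exists c, c0b = Fin c /\
       (forall y, inE y -> exists zy, ltB zy /\
          forall z, zy < z -> ltB z -> y < z ->
            exists dc dg dz,
              derivable_pt_lim (fun t => Rbar_real (c1 y t)) z dc /\
              derivable_pt_lim g0 z dg /\ derivable_pt_lim zeta z dz /\
              Rbar_lt (F0 y z) (Fin ((dc + dg) / dz))) /\
       exists yt zt, inRr yt zt /\ Rbar_lt (F0 yt zt) (Fin c)))).

End Setting.

(* Main.v *)
From Coquelicot Require Import Coquelicot.
From Stdlib Require Import Reals Lra Lia ClassicalEpsilon Classical FunctionalExtensionality.
Require Import Defs.
Open Scope R_scope.

Lemma small_inv eps : 0 < eps -> exists N : nat, forall n, (N <= n)%nat -> / (INR n + 1) < eps.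
Proof.
  intros He. destruct (archimed_cor1 eps He) as [N [HN HN0]].
  exists N. intros n Hn.
  apply Rle_lt_trans with (/ INR N); [|exact HN].
  apply Rinv_le_contravar. apply lt_0_INR; exact HN0.
  apply le_INR in Hn. lra.
Qed.

Lemma inv_pos n : 0 < / (INR n + 1).
Proof. apply Rinv_0_lt_compat. pose proof (pos_INR n). lra. Qed.

Lemma inv_anti n p : (n <= p)%nat -> / (INR p + 1) <= / (INR n + 1).
Proof.
  intros H. apply Rinv_le_contravar. pose proof (pos_INR n); lra.
  apply le_INR in H. lra.
Qed.

Definition choose_fun {A B : Type} (P : A -> B -> Prop) (H : forall x, exists y, P x y) : A -> B :=
  fun x => proj1_sig (constructive_indefinite_description _ (H x)).
Lemma choose_fun_spec {A B : Type} (P : A -> B -> Prop) H x : P x (@choose_fun A B P H x).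
Proof. unfold choose_fun. destruct constructive_indefinite_description; assumption. Qed.

Lemma valadh_pick un l : ValAdh un l -> forall e N, 0 < e -> exists p, (N <= p)%nat /\ Rabs (un p - l) < e.
Proof.
  intros H e N He. destruct (H (fun x => Rabs (x - l) < e) N) as [p Hp].
  - exists (mkposreal e He). intros x Hx. exact Hx.
  - exists p; exact Hp.
Qed.

Section MinLemma.
Variables (E : R -> Prop) (F : R -> R -> Rbar) (T alpha delta : R).
Let D y z := E y /\ E z /\ y <= z.
Hypothesis Hbox : forall x, alpha <= x <= delta -> E x.
Hypothesis Hout : forall y z, D y z -> Rbar_le (F y z) (Fin T) -> alpha <= y /\ z <= delta.
Hypothesis Hpos : forall y z r, D y z -> F y z = Fin r -> 0 <= r.
Hypothesis Hlsc : forall y z, D y z -> alpha <= y -> z <= delta -> forall t, Rbar_lt (Fin t) (F y z) ->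
     exists e, 0 < e /\ forall y' z', D y' z' -> Rabs (y'-y) < e -> Rabs (z'-z) < e -> Rbar_lt (Fin t) (F y' z').
Hypothesis Hwit : exists y z, D y z /\ Rbar_le (F y z) (Fin T).

Let Sset r := exists y z, D y z /\ F y z = Fin r /\ r <= T.

Lemma min_lemma : exists y0 z0, D y0 z0 /\ forall y z, D y z -> Rbar_le (F y0 z0) (F y z).
Proof.
  destruct Hwit as [yw [zw [Dw Fw]]].
  destruct (F yw zw) as [rw|] eqn:Ew; [|simpl in Fw; contradiction].
  assert (Sw : Sset rw) by (exists yw, zw; simpl in Fw; exact (conj Dw (conj Ew Fw))).
  set (E' := fun x => Sset (- x)).
  assert (Eb : bound E').
  { exists 0. intros x [y [z [Dyz [Fyz _]]]]. apply Hpos in Fyz; auto. lra. }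
  assert (Ene : exists x, E' x) by (exists (- rw); unfold E'; rewrite Ropp_involutive; exact Sw).
  destruct (completeness E' Eb Ene) as [L [HL1 HL2]].
  set (m := - L).
  assert (Hm1 : forall r, Sset r -> m <= r).
  { intros r Hr. assert (E' (- r)) by (unfold E'; rewrite Ropp_involutive; exact Hr).
    apply HL1 in H. unfold m; lra. }
  assert (Hm2 : forall e, 0 < e -> exists r, Sset r /\ r < m + e).
  { intros e He. apply NNPP. intros Hn.
    assert (HH : is_upper_bound E' (L - e)).
    { intros x Hx. apply Rnot_lt_le. intros Hlt. apply Hn. exists (- x). split; [exact Hx| unfold m; lra]. }
    apply HL2 in HH. lra. }
  assert (mT : m <= T) by (pose proof (Hm1 rw Sw); simpl in Fw; lra).
  assert (Hseq : forall n : nat, exists p : R * R, exists r, D (fst p) (snd p) /\ F (fst p) (snd p) = Fin r /\ r <= T /\ r < m + / (INR n + 1)).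
  { intros n. destruct (Hm2 _ (inv_pos n)) as [r [[y [z [H1 [H2 H3]]]] H4]].
    exists (y, z), r. simpl. exact (conj H1 (conj H2 (conj H3 H4))). }
  set (pn := choose_fun _ Hseq).
  assert (Hpn : forall n, exists r, D (fst (pn n)) (snd (pn n)) /\ F (fst (pn n)) (snd (pn n)) = Fin r /\ r <= T /\ r < m + / (INR n + 1)).
  { intros n. apply (choose_fun_spec _ Hseq n). }
  set (yn := fun n => fst (pn n)). set (zn := fun n => snd (pn n)).
  assert (Hbx : forall n, alpha <= yn n /\ zn n <= delta /\ yn n <= zn n).
  { intros n. destruct (Hpn n) as [r [H1 [H2 [H3 _]]]].
    destruct (Hout _ _ H1) as [A1 A2]. rewrite H2; simpl; exact H3.
    unfold yn, zn. destruct H1 as [_ [_ H1]]. auto. }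
  destruct (Bolzano_Weierstrass yn (fun c => alpha <= c <= delta) (compact_P3 alpha delta)) as [ly Hly].
  { intros n. destruct (Hbx n) as [A1 [A2 A3]]. lra. }
  assert (Hphi : forall k : nat, exists p, (k <= p)%nat /\ Rabs (yn p - ly) < / (INR k + 1)).
  { intros k. apply valadh_pick; auto. apply inv_pos. }
  set (phi := choose_fun _ Hphi).
  assert (Hphi' : forall k, (k <= phi k)%nat /\ Rabs (yn (phi k) - ly) < / (INR k + 1)).
  { intros k. apply (choose_fun_spec _ Hphi k). }
  destruct (Bolzano_Weierstrass (fun k => zn (phi k)) (fun c => alpha <= c <= delta) (compact_P3 alpha delta)) as [lz Hlz].
  { intros n. destruct (Hbx (phi n)) as [A1 [A2 A3]]. lra. }
  assert (Happ : forall e N, 0 < e -> exists k, (N <= phi k)%nat /\ Rabs (yn (phi k) - ly) < e /\ Rabs (zn (phi k) - lz) < e).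
  { intros e N He. destruct (small_inv e He) as [N1 HN1].
    destruct (valadh_pick _ _ Hlz e (max N N1) He) as [k [Hk1 Hk2]].
    exists k. destruct (Hphi' k) as [P1 P2]. split; [lia|]. split; [|exact Hk2].
    apply Rlt_trans with (/ (INR k + 1)); auto. apply HN1. lia. }
  assert (Hlim : alpha <= ly /\ lz <= delta /\ ly <= lz).
  { split; [|split].
    - apply Rnot_lt_le; intros Hc. destruct (Happ (alpha - ly) 0%nat) as [k [_ [K1 K2]]]; [lra|].
      destruct (Hbx (phi k)) as [A1 [A2 A3]]. apply Rabs_def2 in K1. lra.
    - apply Rnot_lt_le; intros Hc. destruct (Happ (lz - delta) 0%nat) as [k [_ [K1 K2]]]; [lra|].
      destruct (Hbx (phi k)) as [A1 [A2 A3]]. apply Rabs_def2 in K2. lra.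
    - apply Rnot_lt_le; intros Hc. destruct (Happ ((ly - lz)/2) 0%nat) as [k [_ [K1 K2]]]; [lra|].
      destruct (Hbx (phi k)) as [A1 [A2 A3]]. apply Rabs_def2 in K1. apply Rabs_def2 in K2. lra. }
  destruct Hlim as [L1 [L2 L3]].
  assert (Dl : D ly lz) by (split; [apply Hbox; lra|split; [apply Hbox; lra|lra]]).
  assert (Hle : Rbar_le (F ly lz) (Fin m)).
  { apply NNPP. intros Hn.
    assert (exists t, m < t /\ Rbar_lt (Fin t) (F ly lz)) as [t [Ht1 Ht2]].
    { destruct (F ly lz) as [r|]; simpl in *.
      - exists ((r + m)/2). lra.
      - exists (m + 1). lra. }
    destruct (Hlsc _ _ Dl L1 L2 t Ht2) as [e [He Hn2]].
    destruct (small_inv (t - m)) as [N HN]; [lra|].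
    destruct (Happ e N He) as [k [K0 [K1 K2]]].
    destruct (Hpn (phi k)) as [r [P1 [P2 [P3 P4]]]].
    specialize (Hn2 _ _ P1 K1 K2). fold yn zn in P2. rewrite P2 in Hn2. simpl in Hn2.
    specialize (HN _ K0). lra. }
  exists ly, lz. split; [exact Dl|].
  destruct (F ly lz) as [r|] eqn:Er; [|simpl in Hle; contradiction]. simpl in Hle.
  assert (Sr : Sset r) by (exists ly, lz; refine (conj Dl (conj Er _)); lra).
  pose proof (Hm1 r Sr).
  intros y z Dyz. destruct (F y z) as [r'|] eqn:Er'; simpl; auto.
  destruct (Rle_dec r' T).
  - assert (Sset r') by (exists y, z; refine (conj Dyz (conj Er' _)); lra). pose proof (Hm1 r' H0). lra.
  - lra.
Qed.
End MinLemma.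


Lemma Rint_RInt f x y : ex_RInt f x y -> Rint f x y = RInt f x y.
Proof.
  intros H. unfold Rint.
  destruct excluded_middle_informative as [h|h].
  - rewrite (RInt_Reals f x y (epsilon h (fun _ => True))). reflexivity.
  - exfalso. apply h. constructor. apply ex_RInt_Reals_0. exact H.
Qed.

Section Gen.
Variables a b : option R.
Local Notation I := (inI a b).
Local Notation gtA := (gtA a).
Local Notation ltB := (ltB b).

Lemma gtA_mono x y : gtA x -> x <= y -> gtA y.
Proof. unfold Defs.gtA; intros H1 H2; destruct a; auto; lra. Qed.
Lemma ltB_mono x y : ltB x -> y <= x -> ltB y.
Proof. unfold Defs.ltB; intros H1 H2; destruct b; auto; lra. Qed.
Lemma I_between x y t : I x -> I y -> x <= t <= y -> I t.
Proof. intros [H1 H2] [H3 H4] H. split. apply (gtA_mono x); auto; lra. apply (ltB_mono y); auto; lra. Qed.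

Lemma I_open x : I x -> exists d, 0 < d /\ forall y, Rabs (y - x) < d -> I y.
Proof.
  intros [H1 H2]. unfold Defs.gtA, Defs.ltB in *.
  destruct a as [a'|], b as [b'|].
  - exists (Rmin (x - a') (b' - x)). split. apply Rmin_glb_lt; lra.
    intros y Hy. apply Rabs_def2 in Hy. pose proof (Rmin_l (x-a') (b'-x)). pose proof (Rmin_r (x-a') (b'-x)).
    split; unfold Defs.gtA, Defs.ltB; lra.
  - exists (x - a'). split. lra. intros y Hy. apply Rabs_def2 in Hy. split; unfold Defs.gtA, Defs.ltB; auto; lra.
  - exists (b' - x). split. lra. intros y Hy. apply Rabs_def2 in Hy. split; unfold Defs.gtA, Defs.ltB; auto; lra.
  - exists 1. split. lra. intros; split; unfold Defs.gtA, Defs.ltB; auto.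
Qed.

Lemma I_locally x : I x -> locally x I.
Proof.
  intros Hx. destruct (I_open x Hx) as [d [Hd H]]. exists (mkposreal d Hd).
  intros y Hy. apply H. exact Hy.
Qed.

Lemma exRI (f : R -> R) y z : (forall t, I t -> continuous f t) -> I y -> I z -> ex_RInt f y z.
Proof.
  intros Hf Hy Hz. apply (@ex_RInt_continuous R_CompleteNormedModule). intros t Ht. apply Hf.
  destruct (Rle_dec y z).
  - rewrite Rmin_left, Rmax_right in Ht by lra. apply (I_between y z); auto.
  - rewrite Rmin_right, Rmax_left in Ht by lra. apply (I_between z y); auto; lra.
Qed.

Lemma Rint_eq (f : R -> R) y z : (forall t, I t -> continuous f t) -> I y -> I z -> Rint f y z = RInt f y z.
Proof. intros; apply Rint_RInt, exRI; auto. Qed.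

Lemma near_b_above P v : near_b a b P -> I v -> exists x, I x /\ v < x /\ P x.
Proof.
  intros [w [Hw H]] Hv. set (u := Rmax v w).
  assert (Iu : I u) by (unfold u; destruct (Rle_dec v w); [rewrite Rmax_right|rewrite Rmax_left]; auto; lra).
  destruct Iu as [Iu1 Iu2]. unfold Defs.ltB in Iu2.
  destruct b as [b'|] eqn:Eb.
  - exists ((u + b')/2). assert (v <= u /\ w <= u) by (split; [apply Rmax_l|apply Rmax_r]).
    repeat split. apply (gtA_mono u); auto; lra. unfold Defs.ltB; lra. lra.
    apply H. lra. unfold Defs.ltB; lra.
  - exists (u + 1). assert (v <= u /\ w <= u) by (split; [apply Rmax_l|apply Rmax_r]).
    repeat split. apply (gtA_mono u); auto; lra. unfold Defs.ltB; auto. lra.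
    apply H. lra. unfold Defs.ltB; auto.
Qed.

Lemma near_b_and P Q : near_b a b P -> near_b a b Q -> near_b a b (fun x => P x /\ Q x).
Proof.
  intros [w1 [H1 P1]] [w2 [H2 P2]]. exists (Rmax w1 w2). split.
  destruct (Rle_dec w1 w2); [rewrite Rmax_right|rewrite Rmax_left]; auto; lra.
  intros x Hx Hb. pose proof (Rmax_l w1 w2); pose proof (Rmax_r w1 w2).
  split; [apply P1|apply P2]; auto; lra.
Qed.

Lemma near_b_mono (P Q : R -> Prop) : (forall x, I x -> P x -> Q x) -> near_b a b P -> near_b a b Q.
Proof.
  intros HPQ [w [Hw H]]. exists w; split; auto. intros x H1 H2. apply HPQ; auto.
  split; auto. eapply gtA_mono. apply Hw. lra.
Qed.

Lemma near_b_I P : I P -> near_b a b (fun x => P <= x).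
Proof. intros H. exists P. split; auto. intros; lra. Qed.

Lemma lim_b_unique f L1 L2 : lim_b a b f L1 -> lim_b a b f L2 -> L1 = L2.
Proof.
  intros H1 H2. apply NNPP; intros Hn.
  assert (He : 0 < Rabs (L1 - L2) / 2) by (assert (L1 - L2 <> 0) by (intro; apply Hn; lra); pose proof (Rabs_pos_lt _ H); lra).
  destruct (near_b_and _ _ (H1 _ He) (H2 _ He)) as [w [Hw Hx]].
  destruct (near_b_above _ w (ex_intro _ w (conj Hw Hx)) Hw) as [x [_ [_ [A B]]]].
  assert (Rabs (L1 - L2) <= Rabs (f x - L1) + Rabs (f x - L2)).
  { replace (L1 - L2) with (- (f x - L1) + (f x - L2)) by ring.
    eapply Rle_trans. apply Rabs_triang. rewrite Rabs_Ropp. lra. }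
  lra.
Qed.

Lemma lim_b_le2 f g L1 L2 : lim_b a b f L1 -> lim_b a b g L2 -> near_b a b (fun x => f x <= g x) -> L1 <= L2.
Proof.
  intros H1 H2 H3. apply Rnot_lt_le; intros Hn.
  assert (He : 0 < (L1 - L2) / 2) by lra.
  destruct (near_b_and _ _ (near_b_and _ _ (H1 _ He) (H2 _ He)) H3) as [w [Hw Hx]].
  destruct (near_b_above _ w (ex_intro _ w (conj Hw Hx)) Hw) as [x [_ [_ [[A B] C]]]].
  apply Rabs_def2 in A; apply Rabs_def2 in B. lra.
Qed.


Lemma lim_b_ext f g L : near_b a b (fun x => f x = g x) -> lim_b a b f L -> lim_b a b g L.
Proof.
  intros He Hf eps Heps. eapply near_b_mono; [|apply (near_b_and _ _ He (Hf eps Heps))].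
  intros x _ [A B]. rewrite <- A; exact B.
Qed.

Lemma lim_b_affine f L c k : lim_b a b f L -> lim_b a b (fun x => c + k * f x) (c + k * L).
Proof.
  intros H eps He.
  assert (He' : 0 < eps / (Rabs k + 1)) by (apply Rdiv_lt_0_compat; [lra| pose proof (Rabs_pos k); lra]).
  eapply near_b_mono; [|apply (H _ He')]. intros x _ Hx.
  replace (c + k * f x - (c + k * L)) with (k * (f x - L)) by ring. rewrite Rabs_mult.
  pose proof (Rabs_pos k). pose proof (Rabs_pos (f x - L)).
  apply Rle_lt_trans with ((Rabs k + 1) * Rabs (f x - L)). nra.
  apply Rmult_lt_compat_l with (r := Rabs k + 1) in Hx; [|lra].
  replace ((Rabs k + 1) * (eps / (Rabs k + 1))) with eps in Hx by (field; lra). exact Hx.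
Qed.

Lemma mono_lim_b f w0 B : I w0 -> (forall x y, I x -> I y -> w0 <= x <= y -> f x <= f y) ->
  (forall x, I x -> w0 <= x -> f x <= B) -> exists L, lim_b a b f L /\ (forall x, I x -> w0 <= x -> f x <= L).
Proof.
  intros Hw0 Hmono HB.
  set (Es := fun r => exists x, I x /\ w0 <= x /\ r = f x).
  assert (Hb : bound Es) by (exists B; intros r [x [H1 [H2 ->]]]; auto).
  assert (Hne : exists r, Es r) by (exists (f w0), w0; split; [exact Hw0| split; [lra|reflexivity]]).
  destruct (completeness Es Hb Hne) as [L [HL1 HL2]].
  assert (Hup : forall x, I x -> w0 <= x -> f x <= L) by (intros x H1 H2; apply HL1; exists x; auto).
  exists L. split; auto.
  intros eps He.
  assert (exists x, I x /\ w0 <= x /\ L - eps < f x) as [x1 [I1 [W1 F1]]].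
  { apply NNPP; intros Hn. assert (is_upper_bound Es (L - eps)).
    { intros r [x [H1 [H2 ->]]]. apply Rnot_lt_le; intros Hc. apply Hn. exists x; auto. }
    apply HL2 in H. lra. }
  exists x1. split; auto. intros x Hx1 Hx2.
  assert (Ix : I x) by (split; auto; eapply gtA_mono; [apply I1|lra]).
  pose proof (Hmono x1 x I1 Ix ltac:(lra)). pose proof (Hup x Ix ltac:(lra)).
  apply Rabs_def1; lra.
Qed.

Lemma unbounded_b f w0 : I w0 -> (forall x y, I x -> I y -> w0 <= x <= y -> f x <= f y) ->
  ~ (exists L, lim_b a b f L) -> forall K, exists w, I w /\ w0 <= w /\ forall x, I x -> w <= x -> K < f x.
Proof.
  intros Hw0 Hmono Hn K. apply NNPP; intros Hc. apply Hn.
  destruct (mono_lim_b f w0 K Hw0 Hmono) as [L [HL _]]; [|exists L; auto].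
  intros x Ix Hx. apply Rnot_lt_le; intros Hlt. apply Hc. exists x. split; [exact Ix|split; [exact Hx|]].
  intros y Iy Hy. pose proof (Hmono x y Ix Iy ltac:(lra)). lra.
Qed.

Lemma lim_b_limit1 f L b' : b = Some b' -> lim_b a b f L -> limit1_in f I L b'.
Proof.
  intros Eb H eps He. destruct (H eps He) as [w [[Hw1 Hw2] Hw]].
  unfold Defs.ltB in Hw2; rewrite Eb in Hw2.
  exists (b' - w). split. lra. intros x [[Ix1 Ix2] Hd]. simpl in Hd. unfold R_dist in Hd.
  unfold Defs.ltB in Ix2; rewrite Eb in Ix2. apply Rabs_def2 in Hd.
  simpl; unfold R_dist. apply Hw; auto. lra. unfold Defs.ltB; rewrite Eb; auto.
Qed.

Lemma near_a_below P v : near_a a b P -> I v -> exists x, I x /\ x < v /\ P x.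
Proof.
  intros [w [Hw H]] Hv. set (u := Rmin v w).
  assert (Iu : I u) by (unfold u; destruct (Rle_dec v w); [rewrite Rmin_left|rewrite Rmin_right]; auto; lra).
  destruct Iu as [Iu1 Iu2]. unfold Defs.gtA in Iu1.
  destruct a as [a'|] eqn:Ea.
  - exists ((u + a')/2). assert (u <= v /\ u <= w) by (split; [apply Rmin_l|apply Rmin_r]).
    repeat split. unfold Defs.gtA; lra. apply (ltB_mono u); auto; lra. lra.
    apply H. unfold Defs.gtA; lra. lra.
  - exists (u - 1). assert (u <= v /\ u <= w) by (split; [apply Rmin_l|apply Rmin_r]).
    repeat split. unfold Defs.gtA; auto. apply (ltB_mono u); auto; lra. lra.
    apply H. unfold Defs.gtA; auto. lra.
Qed.

Lemma near_a_and P Q : near_a a b P -> near_a a b Q -> near_a a b (fun x => P x /\ Q x).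
Proof.
  intros [w1 [H1 P1]] [w2 [H2 P2]]. exists (Rmin w1 w2). split.
  destruct (Rle_dec w1 w2); [rewrite Rmin_left|rewrite Rmin_right]; auto; lra.
  intros x Hx Hb. pose proof (Rmin_l w1 w2); pose proof (Rmin_r w1 w2).
  split; [apply P1|apply P2]; auto; lra.
Qed.

Lemma near_a_mono (P Q : R -> Prop) : (forall x, I x -> P x -> Q x) -> near_a a b P -> near_a a b Q.
Proof.
  intros HPQ [w [Hw H]]. exists w; split; auto. intros x H1 H2. apply HPQ; auto.
  split; auto. eapply ltB_mono. apply Hw. lra.
Qed.

Lemma lim_a_unique f L1 L2 : lim_a a b f L1 -> lim_a a b f L2 -> L1 = L2.
Proof.
  intros H1 H2. apply NNPP; intros Hn.
  assert (He : 0 < Rabs (L1 - L2) / 2) by (assert (L1 - L2 <> 0) by (intro; apply Hn; lra); pose proof (Rabs_pos_lt _ H); lra).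
  destruct (near_a_and _ _ (H1 _ He) (H2 _ He)) as [w [Hw Hx]].
  destruct (near_a_below _ w (ex_intro _ w (conj Hw Hx)) Hw) as [x [_ [_ [A B]]]].
  assert (Rabs (L1 - L2) <= Rabs (f x - L1) + Rabs (f x - L2)).
  { replace (L1 - L2) with (- (f x - L1) + (f x - L2)) by ring.
    eapply Rle_trans. apply Rabs_triang. rewrite Rabs_Ropp. lra. }
  lra.
Qed.

Lemma lim_a_le2 f g L1 L2 : lim_a a b f L1 -> lim_a a b g L2 -> near_a a b (fun x => f x <= g x) -> L1 <= L2.
Proof.
  intros H1 H2 H3. apply Rnot_lt_le; intros Hn.
  assert (He : 0 < (L1 - L2) / 2) by lra.
  destruct (near_a_and _ _ (near_a_and _ _ (H1 _ He) (H2 _ He)) H3) as [w [Hw Hx]].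
  destruct (near_a_below _ w (ex_intro _ w (conj Hw Hx)) Hw) as [x [_ [_ [[A B] C]]]].
  apply Rabs_def2 in A; apply Rabs_def2 in B. lra.
Qed.

Lemma lim_a_ext f g L : near_a a b (fun x => f x = g x) -> lim_a a b f L -> lim_a a b g L.
Proof.
  intros He Hf eps Heps. eapply near_a_mono; [|apply (near_a_and _ _ He (Hf eps Heps))].
  intros x _ [A B]. rewrite <- A; exact B.
Qed.

Lemma lim_a_affine f L c k : lim_a a b f L -> lim_a a b (fun x => c + k * f x) (c + k * L).
Proof.
  intros H eps He.
  assert (He' : 0 < eps / (Rabs k + 1)) by (apply Rdiv_lt_0_compat; [lra| pose proof (Rabs_pos k); lra]).
  eapply near_a_mono; [|apply (H _ He')]. intros x _ Hx.
  replace (c + k * f x - (c + k * L)) with (k * (f x - L)) by ring. rewrite Rabs_mult.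
  pose proof (Rabs_pos k). pose proof (Rabs_pos (f x - L)).
  apply Rle_lt_trans with ((Rabs k + 1) * Rabs (f x - L)). nra.
  apply Rmult_lt_compat_l with (r := Rabs k + 1) in Hx; [|lra].
  replace ((Rabs k + 1) * (eps / (Rabs k + 1))) with eps in Hx by (field; lra). exact Hx.
Qed.

Lemma mono_lim_a f w0 B : I w0 -> (forall x y, I x -> I y -> x <= y <= w0 -> f x <= f y) ->
  (forall x, I x -> x <= w0 -> B <= f x) -> exists L, lim_a a b f L /\ (forall x, I x -> x <= w0 -> L <= f x).
Proof.
  intros Hw0 Hmono HB.
  set (Es := fun r => exists x, I x /\ x <= w0 /\ r = - f x).
  assert (Hb : bound Es) by (exists (-B); intros r [x [H1 [H2 ->]]]; specialize (HB x H1 H2); lra).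
  assert (Hne : exists r, Es r) by (exists (- f w0), w0; split; [exact Hw0| split; [lra|reflexivity]]).
  destruct (completeness Es Hb Hne) as [L [HL1 HL2]].
  assert (Hup : forall x, I x -> x <= w0 -> -L <= f x) by (intros x H1 H2; assert (Es (- f x)) by (exists x; auto); apply HL1 in H; lra).
  exists (-L). split; auto.
  intros eps He.
  assert (exists x, I x /\ x <= w0 /\ f x < -L + eps) as [x1 [I1 [W1 F1]]].
  { apply NNPP; intros Hn. assert (is_upper_bound Es (L - eps)).
    { intros r [x [H1 [H2 ->]]]. apply Rnot_lt_le; intros Hc. apply Hn. exists x; split; [exact H1|split; [exact H2|lra]]. }
    apply HL2 in H. lra. }
  exists x1. split; auto. intros x Hx1 Hx2.
  assert (Ix : I x) by (split; auto; eapply ltB_mono; [apply I1|lra]).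
  pose proof (Hmono x x1 Ix I1 ltac:(lra)). pose proof (Hup x Ix ltac:(lra)).
  apply Rabs_def1; lra.
Qed.

Lemma unbounded_a f w0 : I w0 -> (forall x y, I x -> I y -> x <= y <= w0 -> f x <= f y) ->
  ~ (exists L, lim_a a b f L) -> forall K, exists w, I w /\ w <= w0 /\ forall x, I x -> x <= w -> f x < K.
Proof.
  intros Hw0 Hmono Hn K. apply NNPP; intros Hc. apply Hn.
  destruct (mono_lim_a f w0 K Hw0 Hmono) as [L [HL _]]; [|exists L; auto].
  intros x Ix Hx. apply Rnot_lt_le; intros Hlt. apply Hc. exists x. split; [exact Ix|split; [exact Hx|]].
  intros y Iy Hy. pose proof (Hmono y x Iy Ix ltac:(lra)). lra.
Qed.

Lemma lim_a_limit1 f L a' : a = Some a' -> lim_a a b f L -> limit1_in f I L a'.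
Proof.
  intros Ea H eps He. destruct (H eps He) as [w [[Hw1 Hw2] Hw]].
  unfold Defs.gtA in Hw1; rewrite Ea in Hw1.
  exists (w - a'). split. lra. intros x [[Ix1 Ix2] Hd]. simpl in Hd. unfold R_dist in Hd.
  unfold Defs.gtA in Ix1; rewrite Ea in Ix1. apply Rabs_def2 in Hd.
  simpl; unfold R_dist. apply Hw; auto. unfold Defs.gtA; rewrite Ea; auto. lra.
Qed.



Lemma mono_le_lim_b f w0 L : I w0 -> (forall x y, I x -> I y -> w0 <= x <= y -> f x <= f y) ->
  lim_b a b f L -> forall x, I x -> w0 <= x -> f x <= L.
Proof.
  intros Hw0 Hmono HL x Ix Hx. apply Rnot_lt_le; intros Hc.
  assert (He : 0 < f x - L) by lra.
  destruct (near_b_and _ _ (HL _ He) (near_b_I x Ix)) as [w [Hw Hp]].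
  destruct (near_b_above _ w (ex_intro _ w (conj Hw Hp)) Hw) as [t [It [_ [A B]]]].
  pose proof (Hmono x t Ix It ltac:(lra)). apply Rabs_def2 in A. lra.
Qed.

Lemma near_a_I P : I P -> near_a a b (fun x => x <= P).
Proof. intros H. exists P. split; auto. intros; lra. Qed.

Lemma mono_ge_lim_a f w0 L : I w0 -> (forall x y, I x -> I y -> x <= y <= w0 -> f x <= f y) ->
  lim_a a b f L -> forall x, I x -> x <= w0 -> L <= f x.
Proof.
  intros Hw0 Hmono HL x Ix Hx. apply Rnot_lt_le; intros Hc.
  assert (He : 0 < L - f x) by lra.
  destruct (near_a_and _ _ (HL _ He) (near_a_I x Ix)) as [w [Hw Hp]].
  destruct (near_a_below _ w (ex_intro _ w (conj Hw Hp)) Hw) as [t [It [_ [A B]]]].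
  pose proof (Hmono t x It Ix ltac:(lra)). apply Rabs_def2 in A. lra.
Qed.

Lemma Ib_spec f y : Ib_fin a b f y -> lim_b a b (fun z => Rint f y z) (Ib a b f y).
Proof. intros H. unfold Ib. apply epsilon_spec. exact H. Qed.

Lemma Ib_shift (f : R -> R) y w : (forall t, I t -> continuous f t) -> I y -> I w -> Ib_fin a b f y ->
  Ib_fin a b f w /\ Ib a b f y = RInt f y w + Ib a b f w.
Proof.
  intros Hf Hy Hw Hfin.
  assert (H : lim_b a b (fun z => Rint f w z) (- RInt f y w + 1 * Ib a b f y)).
  { apply lim_b_ext with (f := fun z => - RInt f y w + 1 * Rint f y z).
    - exists w. split; auto. intros z Hz1 Hz2.
      assert (Iz : I z) by (split; auto; apply (gtA_mono w); [apply Hw|lra]).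
      rewrite !(Rint_eq f) by auto.
      rewrite <- (RInt_Chasles f y w z) by (apply exRI; auto). unfold plus; simpl. ring.
    - apply lim_b_affine. apply Ib_spec; auto. }
  assert (Fw : Ib_fin a b f w) by (eexists; exact H).
  split; auto. pose proof (lim_b_unique _ _ _ H (Ib_spec f w Fw)). lra.
Qed.

End Gen.

Section Gen2.
Variables a b : option R.
Local Notation I := (inI a b).
Lemma lim_b_const c p : I p -> lim_b a b (fun _ => c) c.
Proof. intros Hp eps He. exists p. split; auto. intros. rewrite Rminus_diag, Rabs_R0. exact He. Qed.
Lemma lim_a_const c p : I p -> lim_a a b (fun _ => c) c.
Proof. intros Hp eps He. exists p. split; auto. intros. rewrite Rminus_diag, Rabs_R0. exact He. Qed.

Lemma RInt_le_I (f g : R -> R) y z : (forall t, I t -> continuous f t) -> (forall t, I t -> continuous g t) ->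
  I y -> I z -> y <= z -> (forall t, I t -> y <= t <= z -> f t <= g t) -> RInt f y z <= RInt g y z.
Proof.
  intros Hf Hg Hy Hz Hyz H. apply RInt_le; auto. apply (exRI a b); auto. apply (exRI a b); auto.
  intros t Ht. apply H. apply (I_between a b y z); auto; lra. lra.
Qed.

Lemma RInt_const_R y z c : RInt (fun _ => c) y z = (z - y) * c.
Proof. rewrite RInt_const. reflexivity. Qed.
End Gen2.


Section Main.
Variables (a b : option R) (mu sigma : R -> R) (x0 : R) (refl : Prop) (c0 : R -> R) (c0a c0b : Rbar) (c1 : R -> R -> Rbar) (k1 : R).
Hypothesis Hset : setting a b mu sigma x0.
Hypothesis HA : condA a b mu sigma x0 refl.
Hypothesis HB : condB a b mu sigma x0 refl c0 c0a c0b c1 k1.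
Hypothesis HC : condC a b mu sigma x0 c0 c0a c0b c1.
Local Notation I := (inI a b).
Local Notation s := (sdens mu sigma x0).
Local Notation m := (mdens mu sigma x0).
Local Notation E := (inE a b mu sigma x0).

Lemma Ix0 : I x0.
Proof. destruct Hset as [_ [H _]]; exact H. Qed.

Lemma cont_of_pt f x : continuity_pt f x -> continuous f x.
Proof. intros H; apply continuity_pt_filterlim; exact H. Qed.

Lemma cont_h x : I x -> continuous (fun u => 2 * mu u / sigma u ^ 2) x.
Proof.
  intros Hx. destruct Hset as [_ [_ H]]. destruct (H x Hx) as [Hm [Hs Hs0]].
  apply cont_of_pt.
  apply continuity_pt_div. apply continuity_pt_scal. exact Hm.
  apply (continuity_pt_mult (fun u => sigma u) (fun u => sigma u ^ 1)). exact Hs.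
  apply (continuity_pt_mult (fun u => sigma u) (fun u => 1)). exact Hs. apply continuity_pt_const. intros u v; reflexivity.
  simpl. rewrite Rmult_1_r. intro Hc. apply Hs0. apply Rmult_integral in Hc. tauto.
Qed.

Lemma Rint_deriv (f : R -> R) p x : (forall t, I t -> continuous f t) -> I p -> I x ->
  is_derive (fun t => Rint f p t) x (f x).
Proof.
  intros Hf Hp Hx.
  apply is_derive_ext_loc with (f := fun t => RInt f p t).
  - destruct (I_locally a b x Hx) as [e He]. exists e. intros y Hy. symmetry. apply (Rint_eq a b); auto.
  - apply is_derive_RInt with (a := p).
    + destruct (I_locally a b x Hx) as [e He]. exists e. intros y Hy. apply RInt_correct. apply (exRI a b); auto.
    + apply Hf; auto.
Qed.

Lemma Rint_cont (f : R -> R) p x : (forall t, I t -> continuous f t) -> I p -> I x ->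
  continuous (fun t => Rint f p t) x.
Proof. intros. apply (ex_derive_continuous (fun t => Rint f p t)). exists (f x). apply Rint_deriv; auto. Qed.

Lemma s_pos x : 0 < s x.
Proof. unfold sdens. apply exp_pos. Qed.

Lemma cont_s x : I x -> continuous s x.
Proof.
  intros Hx. unfold sdens. apply continuous_exp_comp.
  apply (continuous_comp (fun t => Rint (fun u => 2 * mu u / sigma u ^ 2) x0 t) (fun r => - r)).
  apply Rint_cont; auto. apply cont_h. apply Ix0.
  apply cont_of_pt. apply continuity_pt_opp. apply continuity_pt_id.
Qed.

Lemma sigma_nz x : I x -> sigma x <> 0.
Proof. intros Hx. destruct Hset as [_ [_ H]]. apply (H x Hx). Qed.

Lemma m_pos x : I x -> 0 < m x.
Proof.
  intros Hx. unfold mdens. apply Rinv_0_lt_compat. apply Rmult_lt_0_compat. 2: apply s_pos.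
  pose proof (sigma_nz x Hx). simpl. rewrite Rmult_1_r. nra.
Qed.

Lemma cont_m x : I x -> continuous m x.
Proof.
  intros Hx. unfold mdens. apply continuous_Rinv_comp.
  - apply (continuous_mult (fun u => sigma u ^ 2) s).
    + destruct Hset as [_ [_ H]]. destruct (H x Hx) as [_ [Hs _]]. apply cont_of_pt.
      apply (continuity_pt_mult (fun u => sigma u) (fun u => sigma u ^ 1)). exact Hs.
      apply (continuity_pt_mult (fun u => sigma u) (fun u => 1)). exact Hs. apply continuity_pt_const. intros u v; reflexivity.
    + apply cont_s; auto.
  - pose proof (m_pos x Hx). unfold mdens in H. intro Hc. rewrite Hc in H. rewrite Rinv_0 in H. lra.
Qed.


Lemma I_E x : I x -> E x.
Proof. intros; left; auto. Qed.

Lemma c0_nonneg x : I x -> 0 <= c0 x.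
Proof. intros Hx. destruct HB as [H _]. apply H, I_E, Hx. Qed.

Lemma c0_cont x : I x -> continuous c0 x.
Proof.
  intros Hx. apply cont_of_pt. destruct HB as [_ [H _]].
  intros eps He. destruct (H x (I_E x Hx) eps He) as [alp [Halp Hl]].
  destruct (I_open a b x Hx) as [d [Hd Hd2]].
  exists (Rmin alp d). split. apply Rmin_glb_lt; lra.
  intros y [_ Hy]. apply Hl. split. apply I_E, Hd2. eapply Rlt_le_trans. apply Hy. apply Rmin_r.
  eapply Rlt_le_trans. apply Hy. apply Rmin_l.
Qed.

Lemma lim_b_RInt (f : R -> R) y L : (forall t, I t -> continuous f t) -> I y ->
  lim_b a b (fun z => Rint f y z) L -> lim_b a b (fun z => RInt f y z) L.
Proof.
  intros Hf Hy H. apply (lim_b_ext a b) with (f := fun z => Rint f y z); auto.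
  exists y. split; auto. intros z H1 H2. apply (Rint_eq a b); auto. split; auto. apply (gtA_mono a y); [apply Hy|lra].
Qed.

Lemma lim_b_Rint (f : R -> R) y L : (forall t, I t -> continuous f t) -> I y ->
  lim_b a b (fun z => RInt f y z) L -> lim_b a b (fun z => Rint f y z) L.
Proof.
  intros Hf Hy H. apply (lim_b_ext a b) with (f := fun z => RInt f y z); auto.
  exists y. split; auto. intros z H1 H2. symmetry. apply (Rint_eq a b); auto. split; auto. apply (gtA_mono a y); [apply Hy|lra].
Qed.

Lemma RInt_mono_upper (f : R -> R) y : (forall t, I t -> continuous f t) -> (forall t, I t -> y <= t -> 0 <= f t) -> I y ->
  forall x z, I x -> I z -> y <= x <= z -> RInt f y x <= RInt f y z.
Proof.
  intros Hf Hpos Hy x z Hx Hz H.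
  rewrite <- (RInt_Chasles f y x z) by (apply (exRI a b); auto). unfold plus; simpl.
  assert (0 <= RInt f x z).
  { rewrite <- (Rmult_0_r (z - x)). rewrite <- RInt_const_R. apply (RInt_le_I a b); [intros; apply continuous_const|exact Hf|exact Hx|exact Hz|lra|intros t It Ht; apply Hpos; auto; lra]. }
  lra.
Qed.

Lemma ex_pt_above v : I v -> exists x, I x /\ v < x.
Proof.
  intros Hv. destruct (near_b_above a b (fun _ => True) v) as [x [Ix [Hx _]]]; auto.
  exists v; split; auto. exists x; auto.
Qed.

Lemma RInt_pos_I (f : R -> R) y z : (forall t, I t -> continuous f t) -> (forall t, I t -> 0 < f t) -> I y -> I z -> y < z -> 0 < RInt f y z.
Proof.
  intros Hf Hp Hy Hz H. apply RInt_gt_0; auto.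
  intros t Ht; apply Hp; apply (I_between a b y z); auto; lra.
  intros t Ht; apply Hf; apply (I_between a b y z); auto; lra.
Qed.

Lemma RInt_point_R (f : R -> R) y : RInt f y y = 0.
Proof. exact (@RInt_point R_CompleteNormedModule y f). Qed.

Lemma RInt_scal_R (f : R -> R) y z k : ex_RInt f y z -> RInt (fun u => k * f u) y z = k * RInt f y z.
Proof. intros H. exact (@RInt_scal R_CompleteNormedModule f y z k H). Qed.

Lemma Chasles_R (f : R -> R) y x z : ex_RInt f y x -> ex_RInt f x z -> RInt f y x + RInt f x z = RInt f y z.
Proof. intros H1 H2. exact (@RInt_Chasles R_CompleteNormedModule f y x z H1 H2). Qed.

Lemma RInt_plus_R (f g : R -> R) y z : ex_RInt f y z -> ex_RInt g y z -> RInt (fun u => f u + g u) y z = RInt f y z + RInt g y z.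
Proof. intros H1 H2. exact (@RInt_plus R_CompleteNormedModule f g y z H1 H2). Qed.
Lemma cont_scal k (f : R -> R) t : continuous f t -> continuous (fun u => k * f u) t.
Proof. intros H. apply (continuous_mult (fun _ => k) f). apply continuous_const. exact H. Qed.

Lemma cs : forall t, I t -> continuous s t.
Proof. intros; apply cont_s; auto. Qed.
Lemma cm : forall t, I t -> continuous m t.
Proof. intros; apply cont_m; auto. Qed.

Lemma m_fin u : I u -> Ib_fin a b m u.
Proof.
  intros Hu.
  assert (Hfin : exists y, I y /\ Ib_fin a b m y).
  { destruct HC as [_ [HCb|[HCb _]]].
    2: { exists x0. split. apply Ix0. destruct HA as [_ [_ [_ [H _]]]]. apply H; auto. apply Ix0. }
    destruct HCb as [_ [L HL]].
    set (Psi := fun u => Rint s x0 u * m u).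
    assert (cPsi : forall t, I t -> continuous Psi t).
    { intros t It. unfold Psi. apply (continuous_mult (fun u => Rint s x0 u) m).
      apply Rint_cont; auto. intros; apply cont_s; auto. apply Ix0. apply cont_m; auto. }
    assert (HL' := lim_b_RInt _ _ _ cPsi Ix0 HL).
    assert (Psipos : forall t, I t -> x0 <= t -> 0 <= Psi t).
    { intros t It Ht. unfold Psi. rewrite (Rint_eq a b) by (auto using cs, Ix0).
      apply Rmult_le_pos; [|left; apply m_pos; auto].
      rewrite <- (RInt_point_R s x0). apply RInt_mono_upper; auto using cs, Ix0. intros; left; apply s_pos. lra. }
    destruct (ex_pt_above x0 Ix0) as [x1 [Ix1 Hx1]].
    assert (S01 : 0 < RInt s x0 x1) by (apply RInt_pos_I; auto using cs, Ix0; intros; apply s_pos).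
    assert (Hmono : forall x y, I x -> I y -> x0 <= x <= y -> RInt Psi x0 x <= RInt Psi x0 y).
    { intros x y Ix Iy Hxy. apply RInt_mono_upper; auto using Ix0. }
    assert (HPL := mono_le_lim_b a b _ x0 L Ix0 Hmono HL').
    exists x1. split; auto.
    destruct (mono_lim_b a b (fun t => RInt m x1 t) x1 ((L - RInt Psi x0 x1) / RInt s x0 x1) Ix1) as [L2 [HL2 _]].
    - intros x y Ix Iy Hxy. apply RInt_mono_upper; auto using cm. intros; left; apply m_pos; auto.
    - intros t It Ht.
      assert (RInt (fun u => RInt s x0 x1 * m u) x1 t <= RInt Psi x1 t).
      { apply (RInt_le_I a b); auto.
        intros t' It'. apply (continuous_mult (fun _ => RInt s x0 x1) m). apply continuous_const. apply cm; auto.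
        intros t' It' Ht'. unfold Psi. rewrite (Rint_eq a b) by (auto using cs, Ix0).
        apply Rmult_le_compat_r. left; apply m_pos; auto.
        apply RInt_mono_upper; auto using cs, Ix0. intros; left; apply s_pos. lra. }
      rewrite (RInt_scal_R m x1 t (RInt s x0 x1)) in H by (apply (exRI a b); auto using cm).
      pose proof (Chasles_R Psi x0 x1 t ltac:(apply (exRI a b); auto using Ix0) ltac:(apply (exRI a b); auto using Ix0)).
      pose proof (HPL t It ltac:(lra)).
      apply Rmult_le_reg_l with (RInt s x0 x1); auto. unfold Rdiv. rewrite <- Rmult_assoc, (Rmult_comm _ (L - _)), Rmult_assoc, Rinv_r, Rmult_1_r by lra. lra.
    - exists L2. apply lim_b_Rint; auto using cm. }
  destruct Hfin as [y [Iy Hy]].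
  apply (Ib_shift a b m y u); auto using cm.
Qed.

Lemma Ib_deriv (f : R -> R) u : (forall t, I t -> continuous f t) -> (forall y, I y -> Ib_fin a b f y) -> I u ->
  is_derive (Ib a b f) u (- f u).
Proof.
  intros Hf Hfin Hu.
  apply is_derive_ext_loc with (f := fun t => RInt f t u + Ib a b f u).
  - destruct (I_locally a b u Hu) as [e He]. exists e. intros t Ht. symmetry.
    apply (Ib_shift a b f t u); auto.
  - assert (H := is_derive_plus (fun t => RInt f t u) (fun _ => Ib a b f u) u (opp (f u)) zero).
    rewrite plus_zero_r in H. apply H.
    + apply (is_derive_RInt' f (fun t => RInt f t u) u u).
      * destruct (I_locally a b u Hu) as [e He]. exists e. intros y Hy. apply (@RInt_correct R_CompleteNormedModule). apply (exRI a b); auto.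
      * apply Hf; auto.
    + apply is_derive_const.
Qed.

Lemma Ib_cont (f : R -> R) u : (forall t, I t -> continuous f t) -> (forall y, I y -> Ib_fin a b f y) -> I u ->
  continuous (Ib a b f) u.
Proof. intros. apply (ex_derive_continuous (Ib a b f)). exists (- f u). apply Ib_deriv; auto. Qed.

Lemma Ib_ge (f : R -> R) y z : (forall t, I t -> continuous f t) -> (forall t, I t -> y <= t -> 0 <= f t) ->
  Ib_fin a b f y -> I y -> I z -> y <= z -> RInt f y z <= Ib a b f y.
Proof.
  intros Hf Hp Hfin Hy Hz Hyz.
  apply (mono_le_lim_b a b (fun t => RInt f y t) y); auto.
  intros x w Ix Iw H. apply RInt_mono_upper; auto.
  apply lim_b_RInt; auto. apply Ib_spec; auto.
Qed.

Lemma Ib_le (f g : R -> R) y : (forall t, I t -> continuous f t) -> (forall t, I t -> continuous g t) ->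
  Ib_fin a b f y -> Ib_fin a b g y -> I y -> (forall t, I t -> y <= t -> f t <= g t) -> Ib a b f y <= Ib a b g y.
Proof.
  intros Hf Hg Ff Fg Hy H.
  apply (lim_b_le2 a b _ _ _ _ (lim_b_RInt f y _ Hf Hy (Ib_spec a b f y Ff)) (lim_b_RInt g y _ Hg Hy (Ib_spec a b g y Fg))).
  exists y. split; auto. intros z H1 H2. assert (Iz : I z) by (split; auto; apply (gtA_mono a y); [apply Hy|lra]).
  apply (RInt_le_I a b); auto. lra. intros; apply H; auto; lra.
Qed.

Lemma Ib_scal (f : R -> R) y k : (forall t, I t -> continuous f t) -> I y -> Ib_fin a b f y ->
  Ib_fin a b (fun v => k * f v) y /\ Ib a b (fun v => k * f v) y = k * Ib a b f y.
Proof.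
  intros Hf Hy Hfin.
  assert (Hk : forall t, I t -> continuous (fun v => k * f v) t).
  { intros t It. apply (continuous_mult (fun _ => k) f). apply continuous_const. apply Hf; auto. }
  assert (H : lim_b a b (fun z => Rint (fun v => k * f v) y z) (0 + k * Ib a b f y)).
  { apply lim_b_Rint; auto. apply (lim_b_ext a b) with (f := fun z => 0 + k * RInt f y z).
    - exists y. split; auto. intros z H1 H2. rewrite RInt_scal_R. ring. apply (exRI a b); auto.
      split; auto. apply (gtA_mono a y); [apply Hy|lra].
    - apply lim_b_affine. apply lim_b_RInt; auto. apply Ib_spec; auto. }
  assert (F : Ib_fin a b (fun v => k * f v) y) by (eexists; exact H).
  split; auto. rewrite (lim_b_unique a b _ _ _ (Ib_spec a b _ y F) H). ring.
Qed.

Lemma M_deriv u : I u -> is_derive (Ib a b m) u (- m u).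
Proof. intros; apply Ib_deriv; auto using cm, m_fin. Qed.
Lemma M_cont u : I u -> continuous (Ib a b m) u.
Proof. intros; apply Ib_cont; auto using cm, m_fin. Qed.
Lemma M_shift u w : I u -> I w -> Ib a b m u = RInt m u w + Ib a b m w.
Proof. intros; apply (Ib_shift a b m u w); auto using cm, m_fin. Qed.
Lemma M_ge u z : I u -> I z -> u <= z -> RInt m u z <= Ib a b m u.
Proof. intros; apply Ib_ge; auto using cm, m_fin. intros; left; apply m_pos; auto. Qed.
Lemma M_pos u : I u -> 0 < Ib a b m u.
Proof.
  intros Hu. destruct (ex_pt_above u Hu) as [z [Iz Hz]].
  pose proof (M_ge u z Hu Iz ltac:(lra)). pose proof (RInt_pos_I m u z cm (fun t It => m_pos t It) Hu Iz Hz). lra.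
Qed.

Definition c0m := fun v => c0 v * m v.
Lemma cc0m t : I t -> continuous c0m t.
Proof. intros It. apply (continuous_mult c0 m). apply c0_cont; auto. apply cm; auto. Qed.
Lemma c0m_fin y : I y -> Ib_fin a b c0m y.
Proof. intros Hy. destruct HB as [_ [_ [_ [_ [_ [_ [H _]]]]]]]. apply H; auto. Qed.

Definition Gf := fun v => 2 * c0m v.
Lemma cG t : I t -> continuous Gf t.
Proof. intros It. apply (continuous_mult (fun _ => 2) c0m). apply continuous_const. apply cc0m; auto. Qed.
Lemma G_fin y : I y -> Ib_fin a b Gf y.
Proof. intros Hy. apply (Ib_scal c0m y 2); auto using cc0m, c0m_fin. Qed.

Lemma G_eq u : Ib a b (fun v => 2 * c0 v * mdens mu sigma x0 v) u = Ib a b Gf u.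
Proof. f_equal. apply functional_extensionality. intros v. unfold Gf, c0m. ring. Qed.


Lemma G_shift u w : I u -> I w -> Ib a b Gf u = RInt Gf u w + Ib a b Gf w.
Proof. intros; apply (Ib_shift a b Gf u w); auto using cG, G_fin. Qed.
Lemma G_cont u : I u -> continuous (Ib a b Gf) u.
Proof. intros; apply Ib_cont; auto using cG, G_fin. Qed.
Lemma G_nonneg u : I u -> 0 <= Ib a b Gf u.
Proof.
  intros Hu. rewrite <- (RInt_point_R Gf u). apply Ib_ge; auto using cG, G_fin; try lra.
  intros t It _. unfold Gf, c0m. pose proof (c0_nonneg t It). pose proof (m_pos t It). nra.
Qed.

Definition zi := fun u => 2 * Ib a b m u * s u.
Definition gi := fun u => Ib a b Gf u * s u.
Lemma czi t : I t -> continuous zi t.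
Proof.
  intros It. unfold zi. apply (continuous_mult (fun u => 2 * Ib a b m u) s); [|apply cs; auto].
  apply (continuous_mult (fun _ => 2) (Ib a b m)). apply continuous_const. apply M_cont; auto.
Qed.
Lemma cgi t : I t -> continuous gi t.
Proof. intros It. unfold gi. apply (continuous_mult (Ib a b Gf) s). apply G_cont; auto. apply cs; auto. Qed.

Local Notation zt := (zeta a b mu sigma x0).
Local Notation gt := (g0 a b mu sigma x0 c0).

Lemma zt_eq x : zt x = Rint zi x0 x.
Proof. reflexivity. Qed.
Lemma gt_eq x : gt x = Rint gi x0 x.
Proof.
  unfold g0, gi. f_equal. apply functional_extensionality. intros u. rewrite G_eq. reflexivity.
Qed.

Lemma zdiff y z : I y -> I z -> zt z - zt y = RInt zi y z.
Proof.
  intros Hy Hz. rewrite !zt_eq, !(Rint_eq a b zi) by auto using czi, Ix0.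
  rewrite <- (Chasles_R zi x0 y z) by (apply (exRI a b); auto using czi, Ix0). ring.
Qed.
Lemma gdiff y z : I y -> I z -> gt z - gt y = RInt gi y z.
Proof.
  intros Hy Hz. rewrite !gt_eq, !(Rint_eq a b gi) by auto using cgi, Ix0.
  rewrite <- (Chasles_R gi x0 y z) by (apply (exRI a b); auto using cgi, Ix0). ring.
Qed.

Lemma zi_pos t : I t -> 0 < zi t.
Proof. intros It. unfold zi. pose proof (M_pos t It). pose proof (s_pos t). nra. Qed.
Lemma gi_nonneg t : I t -> 0 <= gi t.
Proof. intros It. unfold gi. pose proof (G_nonneg t It). pose proof (s_pos t). nra. Qed.

Lemma z_lt y z : I y -> I z -> y < z -> zt y < zt z.
Proof. intros. pose proof (zdiff y z H H0). pose proof (RInt_pos_I zi y z czi zi_pos H H0 H1). lra. Qed.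
Lemma z_le y z : I y -> I z -> y <= z -> zt y <= zt z.
Proof. intros. destruct H1. left; apply z_lt; auto. subst; lra. Qed.
Lemma g_le y z : I y -> I z -> y <= z -> gt y <= gt z.
Proof.
  intros Hy Hz Hyz. pose proof (gdiff y z Hy Hz).
  assert (0 <= RInt gi y z).
  { rewrite <- (RInt_point_R gi y). apply RInt_mono_upper; auto using cgi. intros; apply gi_nonneg; auto. lra. }
  lra.
Qed.

Lemma z_deriv x : I x -> is_derive zt x (zi x).
Proof. intros Hx. apply (Rint_deriv zi x0 x); auto using czi, Ix0. Qed.
Lemma z_cont x : I x -> continuous zt x.
Proof. intros Hx. apply (ex_derive_continuous zt). exists (zi x). apply z_deriv; auto. Qed.
Lemma g_cont x : I x -> continuous gt x.
Proof.
  intros Hx. apply (continuous_ext (fun t => Rint gi x0 t)). intros; symmetry; apply gt_eq.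
  apply Rint_cont; auto using cgi, Ix0.
Qed.

Lemma cmp_lower y z K : I y -> I z -> y <= z -> (forall t, I t -> y <= t <= z -> 2 * K * Ib a b m t <= Ib a b Gf t) ->
  K * (zt z - zt y) <= gt z - gt y.
Proof.
  intros Hy Hz Hyz H. rewrite zdiff, gdiff by auto.
  rewrite <- RInt_scal_R by (apply (exRI a b); auto using czi).
  apply (RInt_le_I a b); auto.
  - intros t It. apply (continuous_mult (fun _ => K) zi). apply continuous_const. apply czi; auto.
  - exact cgi.
  - intros t It Ht. unfold zi, gi. pose proof (H t It Ht). pose proof (s_pos t). nra.
Qed.

Lemma cmp_upper y z C D : I y -> I z -> y <= z -> (forall t, I t -> y <= t <= z -> Ib a b Gf t <= 2 * C * Ib a b m t + D) ->
  gt z - gt y <= C * (zt z - zt y) + D * RInt s y z.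
Proof.
  intros Hy Hz Hyz H. rewrite zdiff, gdiff by auto.
  rewrite <- !RInt_scal_R by (apply (exRI a b); auto using czi, cs).
  rewrite <- RInt_plus_R by (apply (exRI a b); auto; intros t It; apply cont_scal; auto using czi, cs).
  apply (RInt_le_I a b); auto.
  - exact cgi.
  - intros t It. apply (continuous_plus (fun u => C * zi u) (fun u => D * s u)).
    apply cont_scal; apply czi; auto. apply cont_scal; apply cs; auto.
  - intros t It Ht. unfold zi, gi. pose proof (H t It Ht). pose proof (s_pos t). unfold plus; simpl. nra.
Qed.


Lemma in_Rminmax y z t : I y -> I z -> Rmin y z < t /\ t < Rmax y z -> I t.
Proof.
  intros Hy Hz Ht. destruct (Rle_dec y z).
  - rewrite Rmin_left, Rmax_right in Ht by lra. apply (I_between a b y z); auto; lra.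
  - rewrite Rmin_right, Rmax_left in Ht by lra. apply (I_between a b z y); auto; lra.
Qed.

Lemma RInt_ext_I (f g : R -> R) y z : I y -> I z -> (forall t, I t -> f t = g t) -> RInt f y z = RInt g y z.
Proof. intros Hy Hz H. apply RInt_ext. intros t Ht. apply H. apply (in_Rminmax y z); auto. Qed.

Lemma Rint_eq_ext (f g : R -> R) y z : (forall t, I t -> continuous g t) -> I y -> I z ->
  (forall t, I t -> f t = g t) -> Rint f y z = RInt g y z.
Proof.
  intros Hg Hy Hz H. rewrite Rint_RInt. apply RInt_ext_I; auto.
  apply (ex_RInt_ext g f). intros t Ht. symmetry; apply H, (in_Rminmax y z); auto.
  apply (exRI a b); auto.
Qed.

Lemma RInt_nonneg_I (f : R -> R) y z : (forall t, I t -> continuous f t) -> I y -> I z -> y <= z ->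
  (forall t, I t -> y <= t <= z -> 0 <= f t) -> 0 <= RInt f y z.
Proof.
  intros Hf Hy Hz Hyz H. rewrite <- (Rmult_0_r (z - y)), <- RInt_const_R.
  apply (RInt_le_I a b); auto. intros; apply continuous_const.
Qed.

Lemma RInt_mono_lower (f : R -> R) x : (forall t, I t -> continuous f t) -> (forall t, I t -> t <= x -> 0 <= f t) -> I x ->
  forall y1 y2, I y1 -> I y2 -> y1 <= y2 <= x -> RInt f y2 x <= RInt f y1 x.
Proof.
  intros Hf Hp Hx y1 y2 H1 H2 H.
  rewrite <- (Chasles_R f y1 y2 x) by (apply (exRI a b); auto).
  assert (0 <= RInt f y1 y2) by (apply RInt_nonneg_I; auto; [lra|intros; apply Hp; auto; lra]).
  lra.
Qed.

Lemma lim_a_RInt (f : R -> R) x L : (forall t, I t -> continuous f t) -> I x ->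
  lim_a a b (fun y => Rint f y x) L -> lim_a a b (fun y => RInt f y x) L.
Proof.
  intros Hf Hx H. apply (lim_a_ext a b) with (f := fun y => Rint f y x); auto.
  exists x. split; auto. intros y H1 H2. apply (Rint_eq a b); auto. split; auto. apply (ltB_mono b x); [apply Hx|lra].
Qed.

Lemma Ls_ex : exists Ls, 0 < Ls /\ forall y, I y -> y <= x0 -> RInt s y x0 <= Ls.
Proof.
  destruct HA as [H _]. destruct (H x0 Ix0) as [Ls HLs].
  apply lim_a_RInt in HLs; auto using cs, Ix0.
  apply (lim_a_affine a b _ _ 0 (-1)) in HLs.
  assert (Hb := mono_ge_lim_a a b (fun y => 0 + -1 * RInt s y x0) x0 (0 + -1 * Ls) Ix0).
  exists (Rmax Ls 1). split. pose proof (Rmax_r Ls 1); lra.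
  intros y Iy Hy. pose proof (Rmax_l Ls 1).
  assert (- Ls <= - RInt s y x0); [|lra].
  replace (- RInt s y x0) with (0 + -1 * RInt s y x0) by ring. replace (-Ls) with (0 + -1 * Ls) by ring.
  apply Hb; auto. intros y1 y2 I1 I2 Hy12.
  pose proof (RInt_mono_lower s x0 cs (fun t It _ => Rlt_le _ _ (s_pos t)) Ix0 y1 y2 I1 I2 Hy12). lra.
Qed.

Definition Phii := fun u => (Ib a b m u - Ib a b m x0) * s u.
Lemma cPhii t : I t -> continuous Phii t.
Proof.
  intros It. unfold Phii. apply (continuous_mult (fun u => Ib a b m u - Ib a b m x0) s); [|apply cs; auto].
  apply (continuous_minus (Ib a b m) (fun _ => Ib a b m x0)). apply M_cont; auto. apply continuous_const.
Qed.
Lemma Phii_nonneg t : I t -> t <= x0 -> 0 <= Phii t.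
Proof.
  intros It Ht. unfold Phii. rewrite (M_shift t x0) by auto using Ix0.
  apply Rmult_le_pos; [|left; apply s_pos]. ring_simplify.
  apply RInt_nonneg_I; auto using cm, Ix0. intros; left; apply m_pos; auto.
Qed.
Lemma Phi_eq y : I y -> Rint (fun u => Rint m u x0 * s u) y x0 = RInt Phii y x0.
Proof.
  intros Hy. apply Rint_eq_ext; auto using cPhii, Ix0. intros t It. unfold Phii.
  rewrite (M_shift t x0) by auto using Ix0. rewrite (Rint_eq a b) by auto using cm, Ix0. ring.
Qed.
Lemma Phi_mono y1 y2 : I y1 -> I y2 -> y1 <= y2 <= x0 -> RInt Phii y2 x0 <= RInt Phii y1 x0.
Proof. intros. apply RInt_mono_lower; auto using cPhii, Phii_nonneg, Ix0. Qed.

Lemma zt_x0 : zt x0 = 0.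
Proof. rewrite zt_eq, (Rint_eq a b) by auto using czi, Ix0. apply RInt_point_R. Qed.

Lemma zt_Phi y : I y -> y <= x0 -> zt y = -2 * RInt Phii y x0 - 2 * Ib a b m x0 * RInt s y x0.
Proof.
  intros Hy Hyx. pose proof (zdiff y x0 Hy Ix0). rewrite zt_x0 in H.
  assert (RInt zi y x0 = RInt (fun u => 2 * Phii u + 2 * Ib a b m x0 * s u) y x0).
  { apply RInt_ext_I; auto using Ix0. intros t It. unfold zi, Phii. ring. }
  assert (e1 : ex_RInt (fun u => 2 * Phii u) y x0) by (apply (exRI a b); auto using Ix0; intros; apply cont_scal; apply cPhii; auto).
  assert (e2 : ex_RInt (fun u => 2 * Ib a b m x0 * s u) y x0) by (apply (exRI a b); auto using Ix0; intros; apply cont_scal; apply cs; auto).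
  rewrite H0, (RInt_plus_R _ _ _ _ e1 e2) in H.
  rewrite (RInt_scal_R Phii y x0 2), (RInt_scal_R s y x0 (2 * Ib a b m x0)) in H by (apply (exRI a b); auto using cs, cPhii, Ix0).
  lra.
Qed.

Lemma SigA_iff_Phi : SigA a b mu sigma x0 <-> exists L, lim_a a b (fun y => RInt Phii y x0) L.
Proof.
  unfold SigA, Ia_fin. split; intros [L HL]; exists L.
  - apply (lim_a_ext a b) with (f := fun y => Rint (fun u => Rint m u x0 * s u) y x0); auto.
    exists x0. split; auto using Ix0. intros y H1 H2. apply Phi_eq. split; auto. apply (ltB_mono b x0); [apply Ix0|lra].
  - apply (lim_a_ext a b) with (f := fun y => RInt Phii y x0); auto.
    exists x0. split; auto using Ix0. intros y H1 H2. symmetry. apply Phi_eq. split; auto. apply (ltB_mono b x0); [apply Ix0|lra].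
Qed.

Lemma a_att_z : SigA a b mu sigma x0 -> exists Bz, forall y, I y -> y <= x0 -> Bz <= zt y.
Proof.
  intros HS. apply SigA_iff_Phi in HS. destruct HS as [L HL].
  apply (lim_a_affine a b _ _ 0 (-1)) in HL.
  assert (Hb := mono_ge_lim_a a b (fun y => 0 + -1 * RInt Phii y x0) x0 (0 + -1 * L) Ix0).
  destruct Ls_ex as [Ls [HLs0 HLs]].
  exists (-2 * L - 2 * Ib a b m x0 * Ls). intros y Iy Hy.
  rewrite zt_Phi by auto.
  assert (RInt Phii y x0 <= L).
  { assert (0 + -1 * L <= 0 + -1 * RInt Phii y x0); [|lra].
    apply Hb; auto. intros y1 y2 I1 I2 H12. pose proof (Phi_mono y1 y2 I1 I2 H12). lra. }
  pose proof (M_pos x0 Ix0). pose proof (HLs y Iy Hy). nra.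
Qed.

Lemma a_nat_Phi : ~ SigA a b mu sigma x0 -> forall K, exists w, I w /\ w <= x0 /\ forall y, I y -> y <= w -> K < RInt Phii y x0.
Proof.
  intros HS K.
  assert (Hu := unbounded_a a b (fun y => - RInt Phii y x0) x0 Ix0).
  destruct (Hu ltac:(intros y1 y2 I1 I2 H12; pose proof (Phi_mono y1 y2 I1 I2 H12); lra)) with (K := -K) as [w [Iw [Hw H]]].
  - intros [L HL]. apply HS. apply SigA_iff_Phi. exists (0 + -1 * L).
    apply (lim_a_affine a b _ _ 0 (-1)) in HL. apply (lim_a_ext a b) with (f := fun x => 0 + -1 * - RInt Phii x x0); auto.
    exists x0. split; auto using Ix0. intros; ring.
  - exists w. split; auto. split; auto. intros y Iy Hy. specialize (H y Iy Hy). lra.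
Qed.

Lemma a_nat_z : ~ SigA a b mu sigma x0 -> forall K, exists w, I w /\ w <= x0 /\ forall y, I y -> y <= w -> zt y < K.
Proof.
  intros HS K. destruct (a_nat_Phi HS (- K / 2)) as [w [Iw [Hw H]]].
  exists w. split; auto. split; auto. intros y Iy Hy. rewrite zt_Phi by (auto; lra).
  specialize (H y Iy Hy). pose proof (M_pos x0 Ix0).
  assert (0 <= RInt s y x0) by (apply RInt_nonneg_I; auto using cs, Ix0; [lra|intros; left; apply s_pos]).
  nra.
Qed.

Lemma a_nat_M : ~ SigA a b mu sigma x0 -> forall K, exists w, I w /\ w <= x0 /\ forall y, I y -> y <= w -> K < Ib a b m y.
Proof.
  intros HS K. destruct Ls_ex as [Ls [HLs0 HLs]].
  destruct (a_nat_Phi HS (Rabs K * Ls)) as [w [Iw [Hw H]]].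
  exists w. split; auto. split; auto. intros y Iy Hy. specialize (H y Iy Hy).
  assert (RInt Phii y x0 <= (Ib a b m y - Ib a b m x0) * RInt s y x0).
  { rewrite <- RInt_scal_R by (apply (exRI a b); auto using cs, Ix0).
    apply (RInt_le_I a b); auto using cPhii, Ix0. intros; apply cont_scal, cs; auto. lra.
    intros t It Ht. unfold Phii. apply Rmult_le_compat_r. left; apply s_pos.
    rewrite (M_shift t x0), (M_shift y x0) by auto using Ix0. ring_simplify.
    apply RInt_mono_lower; auto using cm, Ix0. intros; left; apply m_pos; auto. }
  assert (0 <= RInt s y x0) by (apply RInt_nonneg_I; auto using cs, Ix0; [lra|intros; left; apply s_pos]).
  pose proof (HLs y Iy ltac:(lra)). pose proof (M_pos x0 Ix0). pose proof (Rabs_pos K).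
  assert (K <= Rabs K) by apply Rle_abs.
  assert (Ib a b m y - Ib a b m x0 > Rabs K).
  { apply Rnot_le_lt. intros Hc.
    assert ((Ib a b m y - Ib a b m x0) * RInt s y x0 <= Rabs K * Ls).
    { destruct (Rle_dec 0 (Ib a b m y - Ib a b m x0)).
      - apply Rmult_le_compat; auto.
      - nra. }
    lra. }
  lra.
Qed.


Lemma RInt_deriv_I (f : R -> R) p x : (forall t, I t -> continuous f t) -> I p -> I x ->
  is_derive (fun t => RInt f p t) x (f x).
Proof.
  intros Hf Hp Hx. apply (is_derive_RInt f (fun t => RInt f p t) p x).
  + destruct (I_locally a b x Hx) as [e He]. exists e. intros y Hy. apply (@RInt_correct R_CompleteNormedModule). apply (exRI a b); auto.
  + apply Hf; auto.
Qed.

Definition Psii := fun u => RInt s x0 u * m u.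
Lemma cPsii t : I t -> continuous Psii t.
Proof.
  intros It. unfold Psii. apply (continuous_mult (fun u => RInt s x0 u) m); [|apply cm; auto].
  apply (ex_derive_continuous (fun u => RInt s x0 u)). exists (s t). apply RInt_deriv_I; auto using cs, Ix0.
Qed.

Lemma in_Rminmax_le y z t : I y -> I z -> Rmin y z <= t <= Rmax y z -> I t.
Proof.
  intros Hy Hz Ht. destruct (Rle_dec y z).
  - rewrite Rmin_left, Rmax_right in Ht by lra. apply (I_between a b y z); auto; lra.
  - rewrite Rmin_right, Rmax_left in Ht by lra. apply (I_between a b z y); auto; lra.
Qed.

Lemma Psi_ident z : I z -> zt z = 2 * RInt Psii x0 z + 2 * Ib a b m z * RInt s x0 z.
Proof.
  intros Hz.
  assert (Hp := is_RInt_scal_derive (V := R_CompleteNormedModule) (fun t => RInt s x0 t) (Ib a b m) s (fun t => - m t) x0 z).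
  assert (HI : forall t, Rmin x0 z <= t <= Rmax x0 z -> I t) by (intros; apply (in_Rminmax_le x0 z); auto using Ix0).
  specialize (Hp (fun t Ht => RInt_deriv_I s x0 t cs Ix0 (HI t Ht)) (fun t Ht => M_deriv t (HI t Ht))
                 (fun t Ht => cs t (HI t Ht))).
  specialize (Hp ltac:(intros t Ht; apply (continuous_opp m); apply cm; auto)).
  apply is_RInt_unique in Hp.
  rewrite RInt_point_R in Hp.
  assert (Hh : RInt (fun t => s t * Ib a b m t - Psii t) x0 z = RInt s x0 z * Ib a b m z).
  { transitivity (RInt (fun t => plus (scal (s t) (Ib a b m t)) (scal (RInt s x0 t) (- m t))) x0 z).
    apply RInt_ext. intros t _. unfold Psii, plus, scal; simpl; unfold mult; simpl. ring.
    etransitivity. apply Hp. unfold minus, plus, opp, scal; simpl; unfold mult; simpl. ring. }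
  assert (E1 : RInt zi x0 z = RInt (fun t => 2 * (s t * Ib a b m t - Psii t) + 2 * Psii t) x0 z).
  { apply RInt_ext_I; auto using Ix0. intros t It. unfold zi, Psii. ring. }
  assert (e1 : ex_RInt (fun t => s t * Ib a b m t - Psii t) x0 z).
  { apply (exRI a b); auto using Ix0. intros t It. apply (continuous_minus (fun u => s u * Ib a b m u) Psii).
    apply (continuous_mult s (Ib a b m)). apply cs; auto. apply M_cont; auto. apply cPsii; auto. }
  rewrite zt_eq, (Rint_eq a b) by auto using czi, Ix0. rewrite E1.
  rewrite RInt_plus_R. rewrite !RInt_scal_R. rewrite Hh. ring.
  - apply (exRI a b); auto using cPsii, Ix0.
  - exact e1.
  - apply (exRI a b); auto using Ix0. intros; apply cont_scal.
    apply (continuous_minus (fun u => s u * Ib a b m u) Psii).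
    apply (continuous_mult s (Ib a b m)). apply cs; auto. apply M_cont; auto. apply cPsii; auto.
  - apply (exRI a b); auto using Ix0. intros; apply cont_scal, cPsii; auto.
Qed.


Lemma NB_iff : NB a b mu sigma x0 <-> exists L, lim_b a b (fun z => RInt Psii x0 z) L.
Proof.
  assert (Heq : forall z, I z -> Rint (fun u => Rint s x0 u * m u) x0 z = RInt Psii x0 z).
  { intros z Iz. apply Rint_eq_ext; auto using cPsii, Ix0. intros t It. unfold Psii.
    rewrite (Rint_eq a b) by auto using cs, Ix0. reflexivity. }
  unfold NB, Ib_fin. split; intros [L HL]; exists L.
  - apply (lim_b_ext a b) with (f := fun z => Rint (fun u => Rint s x0 u * m u) x0 z); auto.
    exists x0. split; auto using Ix0. intros z H1 H2. apply Heq. split; auto. apply (gtA_mono a x0); [apply Ix0|lra].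
  - apply (lim_b_ext a b) with (f := fun z => RInt Psii x0 z); auto.
    exists x0. split; auto using Ix0. intros z H1 H2. symmetry. apply Heq. split; auto. apply (gtA_mono a x0); [apply Ix0|lra].
Qed.

Lemma S_nonneg z : I z -> x0 <= z -> 0 <= RInt s x0 z.
Proof. intros. apply RInt_nonneg_I; auto using cs, Ix0. intros; left; apply s_pos. Qed.

Lemma Psii_nonneg t : I t -> x0 <= t -> 0 <= Psii t.
Proof. intros. unfold Psii. apply Rmult_le_pos. apply S_nonneg; auto. left; apply m_pos; auto. Qed.

Lemma Psi_mono z1 z2 : I z1 -> I z2 -> x0 <= z1 <= z2 -> RInt Psii x0 z1 <= RInt Psii x0 z2.
Proof. intros. apply RInt_mono_upper; auto using cPsii, Psii_nonneg, Ix0. Qed.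

Lemma b_ent_z : NB a b mu sigma x0 -> exists Bz, forall z, I z -> x0 <= z -> zt z <= Bz.
Proof.
  intros HN. apply NB_iff in HN. destruct HN as [L HL].
  assert (HPL := mono_le_lim_b a b _ x0 L Ix0 (fun x y Ix Iy H => Psi_mono x y Ix Iy H) HL).
  exists (2 * L). intros z Iz Hz.
  assert (Ib a b m z * RInt s x0 z <= L - RInt Psii x0 z).
  { assert (H1 := lim_b_affine a b _ _ 0 (RInt s x0 z) (lim_b_RInt m z _ cm Iz (Ib_spec a b m z (m_fin z Iz)))).
    assert (H2 := lim_b_const a b (L - RInt Psii x0 z) z Iz).
    assert (0 + RInt s x0 z * Ib a b m z <= L - RInt Psii x0 z); [|lra].
    apply (lim_b_le2 a b _ _ _ _ H1 H2).
    exists z. split; auto. intros t H3 H4. assert (It : I t) by (split; auto; apply (gtA_mono a z); [apply Iz|lra]).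
    assert (RInt (fun u => RInt s x0 z * m u) z t <= RInt Psii z t).
    { apply (RInt_le_I a b); auto using cPsii. intros; apply cont_scal, cm; auto. lra.
      intros u Iu Hu. unfold Psii. apply Rmult_le_compat_r. left; apply m_pos; auto.
      apply RInt_mono_upper; auto using cs, Ix0. intros; left; apply s_pos. lra. }
    rewrite RInt_scal_R in H by (apply (exRI a b); auto using cm).
    pose proof (Chasles_R Psii x0 z t ltac:(apply (exRI a b); auto using cPsii, Ix0) ltac:(apply (exRI a b); auto using cPsii)).
    pose proof (HPL t It ltac:(lra)). lra. }
  rewrite Psi_ident by auto. lra.
Qed.

Lemma b_nat_z : ~ NB a b mu sigma x0 -> forall K, exists w, I w /\ x0 <= w /\ forall z, I z -> w <= z -> K < zt z.
Proof.
  intros HN K.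
  destruct (unbounded_b a b (fun z => RInt Psii x0 z) x0 Ix0 (fun x y Ix Iy H => Psi_mono x y Ix Iy H)) with (K := K / 2) as [w [Iw [Hw H]]].
  - intros HL. apply HN. apply NB_iff. exact HL.
  - exists w. split; auto. split; auto. intros z Iz Hz. rewrite Psi_ident by auto.
    specialize (H z Iz Hz). pose proof (M_pos z Iz). pose proof (S_nonneg z Iz ltac:(lra)). nra.
Qed.


Lemma G_upper_left w1 C : I w1 -> 0 <= C -> (forall t, I t -> t <= w1 -> c0 t <= C) ->
  forall t, I t -> t <= w1 -> Ib a b Gf t <= 2 * C * Ib a b m t + Ib a b Gf w1.
Proof.
  intros Iw HC0 Hc t It Ht. rewrite (G_shift t w1) by auto.
  assert (RInt Gf t w1 <= RInt (fun u => 2 * C * m u) t w1).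
  { apply (RInt_le_I a b); auto using cG. intros; apply cont_scal, cm; auto.
    intros u Iu Hu. unfold Gf, c0m. pose proof (Hc u Iu ltac:(lra)). pose proof (m_pos u Iu). pose proof (c0_nonneg u Iu). nra. }
  rewrite RInt_scal_R in H by (apply (exRI a b); auto using cm).
  rewrite (M_shift t w1) by auto. pose proof (M_pos w1 Iw). nra.
Qed.

Lemma a_att_g : SigA a b mu sigma x0 -> (exists C w1, I w1 /\ w1 <= x0 /\ 0 <= C /\ forall t, I t -> t <= w1 -> c0 t <= C) ->
  exists Bg, forall y, I y -> y <= x0 -> Bg <= gt y.
Proof.
  intros HS [C [w1 [Iw [Hw [HC0 Hc]]]]].
  destruct (a_att_z HS) as [Bz HBz]. destruct Ls_ex as [Ls [HLs0 HLs]].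
  exists (gt w1 - C * (zt w1 - Bz) - Ib a b Gf w1 * Ls). intros y Iy Hy.
  pose proof (G_nonneg w1 Iw). pose proof (HBz w1 Iw Hw).
  destruct (Rle_dec y w1).
  - pose proof (cmp_upper y w1 C (Ib a b Gf w1) Iy Iw r (fun t It Ht => G_upper_left w1 C Iw HC0 Hc t It ltac:(lra))).
    assert (RInt s y w1 <= Ls).
    { eapply Rle_trans; [|apply (HLs y Iy Hy)]. apply RInt_mono_upper; auto using cs, Ix0.
      intros; left; apply s_pos. }
    pose proof (HBz y Iy Hy). nra.
  - pose proof (g_le w1 y Iw Iy ltac:(lra)). nra.
Qed.

Lemma b_ent_g : NB a b mu sigma x0 -> (exists C w1, I w1 /\ x0 <= w1 /\ 0 <= C /\ forall t, I t -> w1 <= t -> c0 t <= C) ->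
  exists Bg, forall z, I z -> x0 <= z -> gt z <= Bg.
Proof.
  intros HN [C [w1 [Iw [Hw [HC0 Hc]]]]].
  destruct (b_ent_z HN) as [Bz HBz].
  exists (gt w1 + C * (Bz - zt w1)). intros z Iz Hz.
  pose proof (HBz w1 Iw Hw).
  destruct (Rle_dec w1 z).
  - assert (HG : forall t, I t -> w1 <= t <= z -> Ib a b Gf t <= 2 * C * Ib a b m t + 0).
    { intros t It Ht. rewrite Rplus_0_r. destruct (Ib_scal m t (2 * C) cm It (m_fin t It)) as [F1 E1].
      rewrite <- E1. apply Ib_le; auto using cG, G_fin. intros; apply cont_scal, cm; auto.
      intros u Iu Hu. unfold Gf, c0m. pose proof (Hc u Iu ltac:(lra)). pose proof (m_pos u Iu). nra. }
    pose proof (cmp_upper w1 z C 0 Iw Iz r HG). pose proof (HBz z Iz Hz). nra.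
  - pose proof (g_le z w1 Iz Iw ltac:(lra)). nra.
Qed.

Lemma a_nat_g K' : 0 < K' -> ~ SigA a b mu sigma x0 ->
  (exists K'' w1, K' < K'' /\ I w1 /\ forall t, I t -> t <= w1 -> K'' <= c0 t) ->
  exists w, I w /\ forall y z, I y -> I z -> y <= z <= w -> K' * (zt z - zt y) <= gt z - gt y.
Proof.
  intros HK HS [K'' [w1 [HK'' [Iw1 Hc]]]].
  destruct (a_nat_M HS (K'' * Ib a b m w1 / (K'' - K'))) as [w2 [Iw2 [_ Hw2]]].
  set (w := Rmin w1 w2).
  assert (Iw : I w) by (unfold w; destruct (Rle_dec w1 w2); [rewrite Rmin_left|rewrite Rmin_right]; auto; lra).
  exists w. split; auto. intros y z Iy Iz Hyz. apply cmp_lower; auto. lra.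
  intros t It Ht. assert (Hm1 : w <= w1) by apply Rmin_l. assert (Hm2 : w <= w2) by apply Rmin_r.
  rewrite (G_shift t w1) by auto.
  assert (HR : 2 * K'' * RInt m t w1 <= RInt Gf t w1).
  { rewrite <- RInt_scal_R by (apply (exRI a b); auto using cm).
    apply (RInt_le_I a b); auto using cG. intros; apply cont_scal, cm; auto. lra.
    intros u Iu Hu. unfold Gf, c0m. pose proof (Hc u Iu ltac:(lra)). pose proof (m_pos u Iu). nra. }
  assert (HM := Hw2 t It ltac:(lra)). rewrite (M_shift t w1) in * by auto.
  pose proof (G_nonneg w1 Iw1). pose proof (M_pos w1 Iw1).
  assert (K'' * Ib a b m w1 <= (K'' - K') * (RInt m t w1 + Ib a b m w1)).
  { assert (Eq : K'' * Ib a b m w1 = (K'' - K') * (K'' * Ib a b m w1 / (K'' - K'))) by (field; lra).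
    rewrite Eq. apply Rmult_le_compat_l; lra. }
  nra.
Qed.

Lemma b_nat_g K' : (exists w1, I w1 /\ forall t, I t -> w1 <= t -> K' <= c0 t) ->
  exists w, I w /\ forall y z, I y -> I z -> w <= y <= z -> K' * (zt z - zt y) <= gt z - gt y.
Proof.
  intros [w1 [Iw1 Hc]]. exists w1. split; auto. intros y z Iy Iz Hyz.
  apply cmp_lower; auto. lra. intros t It Ht.
  destruct (Ib_scal m t (2 * K') cm It (m_fin t It)) as [F1 E1].
  rewrite <- E1. apply Ib_le; auto using cG, G_fin. intros; apply cont_scal, cm; auto.
  intros u Iu Hu. unfold Gf, c0m. pose proof (Hc u Iu ltac:(lra)). pose proof (m_pos u Iu). nra.
Qed.


Lemma I_a a' t : a = Some a' -> (I t <-> a' < t /\ ltB b t).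
Proof. intros Ea. unfold inI, gtA. rewrite Ea. tauto. Qed.
Lemma I_b b' t : b = Some b' -> (I t <-> gtA a t /\ t < b').
Proof. intros Eb. unfold inI, ltB. rewrite Eb. tauto. Qed.

Lemma ext_I f p : I p -> extv a b f p = f p.
Proof. intros Hp. unfold extv. destruct excluded_middle_informative; tauto. Qed.

Lemma ext_spec f p : ~ I p -> (exists L, limit1_in f I L p) -> limit1_in f I (extv a b f p) p.
Proof.
  intros Hp HL. unfold extv. destruct excluded_middle_informative; [tauto|].
  apply epsilon_spec. exact HL.
Qed.

Lemma notI_a a' : a = Some a' -> ~ I a'.
Proof. intros Ea H. apply (I_a a' a') in H; auto. lra. Qed.
Lemma notI_b b' : b = Some b' -> ~ I b'.
Proof. intros Eb H. apply (I_b b' b') in H; auto. lra. Qed.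

Lemma lim1_le_a (f : R -> R) a' L : a = Some a' -> limit1_in f I L a' ->
  (forall x y, I x -> I y -> x <= y -> f x <= f y) -> forall t, I t -> L <= f t.
Proof.
  intros Ea HL Hm t It. apply Rnot_lt_le; intros Hc.
  destruct (HL (L - f t)) as [alp [Halp H]]; [lra|].
  apply (I_a a' t Ea) in It as It'. destruct It' as [Ht1 Ht2].
  set (x := Rmin ((a' + t) / 2) (a' + alp / 2)).
  assert (Hx1 : a' < x) by (unfold x; apply Rmin_glb_lt; lra).
  assert (Hx2 : x <= (a' + t) / 2) by apply Rmin_l. assert (Hx3 : x <= a' + alp / 2) by apply Rmin_r.
  assert (Ix : I x) by (apply (I_a a' x Ea); split; auto; apply (ltB_mono b t); auto; lra).
  assert (Hd : dist R_met x a' < alp) by (unfold dist; simpl; unfold R_dist; rewrite Rabs_right; lra). specialize (H x (conj Ix Hd)).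
  unfold dist in H; simpl in H; unfold R_dist in H. apply Rabs_def2 in H. pose proof (Hm x t Ix It ltac:(lra)). lra.
Qed.

Lemma lim1_ge_b (f : R -> R) b' L : b = Some b' -> limit1_in f I L b' ->
  (forall x y, I x -> I y -> x <= y -> f x <= f y) -> forall t, I t -> f t <= L.
Proof.
  intros Eb HL Hm t It. apply Rnot_lt_le; intros Hc.
  destruct (HL (f t - L)) as [alp [Halp H]]; [lra|].
  apply (I_b b' t Eb) in It as It'. destruct It' as [Ht1 Ht2].
  set (x := Rmax ((b' + t) / 2) (b' - alp / 2)).
  assert (Hx1 : x < b') by (unfold x; apply Rmax_lub_lt; lra).
  assert (Hx2 : (b' + t) / 2 <= x) by apply Rmax_l. assert (Hx3 : b' - alp / 2 <= x) by apply Rmax_r.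
  assert (Ix : I x) by (apply (I_b b' x Eb); split; auto; apply (gtA_mono a t); auto; lra).
  assert (Hd : dist R_met x b' < alp) by (unfold dist; simpl; unfold R_dist; rewrite Rabs_left; lra). specialize (H x (conj Ix Hd)).
  unfold dist in H; simpl in H; unfold R_dist in H. apply Rabs_def2 in H. pose proof (Hm t x It Ix ltac:(lra)). lra.
Qed.

Lemma att_SigA : attainable_a a b mu sigma x0 -> SigA a b mu sigma x0.
Proof. intros [[H _]|[H _]]; exact H. Qed.
Lemma ent_NB : entrance_b a b mu sigma x0 -> NB a b mu sigma x0.
Proof. intros [_ H]; exact H. Qed.

Lemma c0_bound_a a' : a = Some a' -> attainable_a a b mu sigma x0 ->
  exists C w1, I w1 /\ w1 <= x0 /\ 0 <= C /\ forall t, I t -> t <= w1 -> c0 t <= C.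
Proof.
  intros Ea Hat. assert (Ea' : E a') by (right; left; auto).
  destruct HB as [Hpos [Hc _]]. destruct (Hc a' Ea' 1) as [alp [Halp H]]; [lra|].
  pose proof Ix0 as Ix. apply (I_a a' x0 Ea) in Ix. destruct Ix as [Ix1 Ix2].
  exists (c0 a' + 1), (Rmin x0 (a' + alp / 2)).
  assert (Hw1 : a' < Rmin x0 (a' + alp / 2)) by (apply Rmin_glb_lt; lra).
  pose proof (Rmin_l x0 (a' + alp / 2)). pose proof (Rmin_r x0 (a' + alp / 2)).
  split. apply (I_a a' _ Ea). split; auto. apply (ltB_mono b x0); auto.
  split; auto. split. pose proof (Hpos a' Ea'); lra.
  intros t It Ht. apply (I_a a' t Ea) in It as It'.
  assert (Hd : dist R_met t a' < alp) by (unfold dist; simpl; unfold R_dist; rewrite Rabs_right; lra). specialize (H t (conj (I_E t It) Hd)).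
  unfold dist in H; simpl in H; unfold R_dist in H. apply Rabs_def2 in H. lra.
Qed.

Lemma c0_bound_b b' : b = Some b' -> entrance_b a b mu sigma x0 ->
  exists C w1, I w1 /\ x0 <= w1 /\ 0 <= C /\ forall t, I t -> w1 <= t -> c0 t <= C.
Proof.
  intros Eb Hen. assert (Eb' : E b') by (right; right; auto).
  destruct HB as [Hpos [Hc _]]. destruct (Hc b' Eb' 1) as [alp [Halp H]]; [lra|].
  pose proof Ix0 as Ix. apply (I_b b' x0 Eb) in Ix. destruct Ix as [Ix1 Ix2].
  exists (c0 b' + 1), (Rmax x0 (b' - alp / 2)).
  assert (Hw1 : Rmax x0 (b' - alp / 2) < b') by (apply Rmax_lub_lt; lra).
  pose proof (Rmax_l x0 (b' - alp / 2)). pose proof (Rmax_r x0 (b' - alp / 2)).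
  split. apply (I_b b' _ Eb). split; auto. apply (gtA_mono a x0); auto.
  split; auto. split. pose proof (Hpos b' Eb'); lra.
  intros t It Ht. apply (I_b b' t Eb) in It as It'.
  assert (Hd : dist R_met t b' < alp) by (unfold dist; simpl; unfold R_dist; rewrite Rabs_left; lra). specialize (H t (conj (I_E t It) Hd)).
  unfold dist in H; simpl in H; unfold R_dist in H. apply Rabs_def2 in H. lra.
Qed.

Lemma za_lim a' : a = Some a' -> attainable_a a b mu sigma x0 -> exists L, limit1_in zt I L a'.
Proof.
  intros Ea Hat. destruct (a_att_z (att_SigA Hat)) as [Bz HBz].
  destruct (mono_lim_a a b zt x0 Bz Ix0) as [L [HL _]]; auto.
  intros; apply z_le; auto; lra.
  exists L. apply (lim_a_limit1 a b); auto.
Qed.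

Lemma ga_lim a' : a = Some a' -> attainable_a a b mu sigma x0 -> exists L, limit1_in gt I L a'.
Proof.
  intros Ea Hat. destruct (a_att_g (att_SigA Hat) (c0_bound_a a' Ea Hat)) as [Bg HBg].
  destruct (mono_lim_a a b gt x0 Bg Ix0) as [L [HL _]]; auto.
  intros; apply g_le; auto; lra.
  exists L. apply (lim_a_limit1 a b); auto.
Qed.

Lemma zb_lim b' : b = Some b' -> entrance_b a b mu sigma x0 -> exists L, limit1_in zt I L b'.
Proof.
  intros Eb Hen. destruct (b_ent_z (ent_NB Hen)) as [Bz HBz].
  destruct (mono_lim_b a b zt x0 Bz Ix0) as [L [HL _]]; auto.
  intros; apply z_le; auto; lra.
  exists L. apply (lim_b_limit1 a b); auto.
Qed.

Lemma gb_lim b' : b = Some b' -> entrance_b a b mu sigma x0 -> exists L, limit1_in gt I L b'.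
Proof.
  intros Eb Hen. destruct (b_ent_g (ent_NB Hen) (c0_bound_b b' Eb Hen)) as [Bg HBg].
  destruct (mono_lim_b a b gt x0 Bg Ix0) as [L [HL _]]; auto.
  intros; apply g_le; auto; lra.
  exists L. apply (lim_b_limit1 a b); auto.
Qed.


Lemma ab_lt a' b' : a = Some a' -> b = Some b' -> a' < b'.
Proof. intros Ea Eb. destruct Hset as [H _]. rewrite Ea, Eb in H. exact H. Qed.

Lemma x0_a a' : a = Some a' -> a' < x0.
Proof. intros Ea. pose proof Ix0 as H. apply (I_a a' x0 Ea) in H. tauto. Qed.
Lemma x0_b b' : b = Some b' -> x0 < b'.
Proof. intros Eb. pose proof Ix0 as H. apply (I_b b' x0 Eb) in H. tauto. Qed.

Section ExtGen.
Variable f : R -> R.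
Hypothesis Hla : forall a', a = Some a' -> attainable_a a b mu sigma x0 -> exists L, limit1_in f I L a'.
Hypothesis Hlb : forall b', b = Some b' -> entrance_b a b mu sigma x0 -> exists L, limit1_in f I L b'.
Hypothesis Hmon : forall x y, I x -> I y -> x <= y -> f x <= f y.

Lemma ext_a_le a' : a = Some a' -> attainable_a a b mu sigma x0 -> forall t, I t -> extv a b f a' <= f t.
Proof. intros Ea Hat. apply (lim1_le_a f a'); auto. apply ext_spec; auto. apply notI_a; auto. Qed.
Lemma ext_b_ge b' : b = Some b' -> entrance_b a b mu sigma x0 -> forall t, I t -> f t <= extv a b f b'.
Proof. intros Eb Hen. apply (lim1_ge_b f b'); auto. apply ext_spec; auto. apply notI_b; auto. Qed.

Lemma mid_a a' z : a = Some a' -> I z -> I ((a' + z) / 2) /\ a' < (a' + z) / 2 < z.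
Proof.
  intros Ea Iz. apply (I_a a' z Ea) in Iz as H. destruct H as [H1 H2].
  split; [|lra]. apply (I_a a' _ Ea). split. lra. apply (ltB_mono b z); auto; lra.
Qed.
Lemma mid_b b' y : b = Some b' -> I y -> I ((y + b') / 2) /\ y < (y + b') / 2 < b'.
Proof.
  intros Eb Iy. apply (I_b b' y Eb) in Iy as H. destruct H as [H1 H2].
  split; [|lra]. apply (I_b b' _ Eb). split. apply (gtA_mono a y); auto; lra. lra.
Qed.

Lemma ext_le : forall y z, E y -> E z -> y <= z -> extv a b f y <= extv a b f z.
Proof.
  intros y z Ey Ez Hyz. destruct (Req_dec y z) as [<-|Hne]; [lra|].
  destruct Ey as [Iy|[[Ea Hat]|[Eb Hen]]]; destruct Ez as [Iz|[[Ea' Hat']|[Eb' Hen']]].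
  - rewrite !ext_I by auto. apply Hmon; auto.
  - apply (I_a z y Ea') in Iy. lra.
  - rewrite ext_I by auto. apply ext_b_ge; auto.
  - rewrite (ext_I f z Iz). apply ext_a_le; auto.
  - rewrite Ea in Ea'; inversion Ea'; lra.
  - destruct (mid_a y x0 Ea Ix0) as [It _]. pose proof (ext_a_le y Ea Hat _ It). pose proof (ext_b_ge z Eb' Hen' _ It). lra.
  - apply (I_b y z Eb) in Iz. lra.
  - pose proof (ab_lt z y Ea' Eb). lra.
  - rewrite Eb in Eb'; inversion Eb'; lra.
Qed.
End ExtGen.

Section ExtGenS.
Variable f : R -> R.
Hypothesis Hla : forall a', a = Some a' -> attainable_a a b mu sigma x0 -> exists L, limit1_in f I L a'.
Hypothesis Hlb : forall b', b = Some b' -> entrance_b a b mu sigma x0 -> exists L, limit1_in f I L b'.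
Hypothesis Hmon : forall x y, I x -> I y -> x < y -> f x < f y.

Lemma Hmon_le : forall x y, I x -> I y -> x <= y -> f x <= f y.
Proof. intros x y Ix Iy H. destruct H. left; auto. subst; lra. Qed.

Lemma ext_lt : forall y z, E y -> E z -> y < z -> extv a b f y < extv a b f z.
Proof.
  intros y z Ey Ez Hyz.
  destruct Ey as [Iy|[[Ea Hat]|[Eb Hen]]]; destruct Ez as [Iz|[[Ea' Hat']|[Eb' Hen']]].
  - rewrite !ext_I by auto. apply Hmon; auto.
  - apply (I_a z y Ea') in Iy. lra.
  - rewrite ext_I by auto. destruct (mid_b z y Eb' Iy) as [It Ht].
    pose proof (ext_b_ge f Hlb Hmon_le z Eb' Hen' _ It). pose proof (Hmon y _ Iy It ltac:(lra)). lra.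
  - rewrite (ext_I f z Iz). destruct (mid_a y z Ea Iz) as [It Ht].
    pose proof (ext_a_le f Hla Hmon_le y Ea Hat _ It). pose proof (Hmon _ z It Iz ltac:(lra)). lra.
  - rewrite Ea in Ea'; inversion Ea'; lra.
  - destruct (mid_a y x0 Ea Ix0) as [It Ht]. destruct (mid_b z x0 Eb' Ix0) as [It' Ht'].
    pose proof (ext_a_le f Hla Hmon_le y Ea Hat _ It). pose proof (ext_b_ge f Hlb Hmon_le z Eb' Hen' _ It').
    pose proof (Hmon _ _ It It' ltac:(lra)). lra.
  - apply (I_b y z Eb) in Iz. lra.
  - pose proof (ab_lt z y Ea' Eb). lra.
  - rewrite Eb in Eb'; inversion Eb'; lra.
Qed.
End ExtGenS.

Section ExtRC.
Variable f : R -> R.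
Hypothesis Hla : forall a', a = Some a' -> attainable_a a b mu sigma x0 -> exists L, limit1_in f I L a'.
Hypothesis Hlb : forall b', b = Some b' -> entrance_b a b mu sigma x0 -> exists L, limit1_in f I L b'.
Hypothesis Hc : forall x, I x -> continuous f x.

Lemma ext_rc : forall p, E p -> forall eps, 0 < eps -> exists d, 0 < d /\
  forall q, E q -> Rabs (q - p) < d -> Rabs (extv a b f q - extv a b f p) < eps.
Proof.
  intros p Ep eps He.
  destruct Ep as [Ip|[[Ea Hat]|[Eb Hen]]].
  - assert (Hcp := Hc p Ip). apply continuity_pt_filterlim in Hcp.
    destruct (Hcp eps He) as [alp [Halp H]].
    destruct (I_open a b p Ip) as [dI [HdI HI]].
    exists (Rmin alp dI). split. apply Rmin_glb_lt; lra.
    intros q Eq Hq. assert (Iq : I q) by (apply HI; eapply Rlt_le_trans; [apply Hq|apply Rmin_r]).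
    rewrite !ext_I by auto. destruct (Req_dec q p) as [->|Hne].
    + rewrite Rminus_diag, Rabs_R0; lra.
    + apply H. split. split. exact Logic.I. auto. unfold dist; simpl; unfold R_dist. eapply Rlt_le_trans; [apply Hq|apply Rmin_l].
  - assert (HL := ext_spec f p (notI_a p Ea) (Hla p Ea Hat)).
    destruct (HL eps He) as [alp [Halp H]].
    pose proof (x0_a p Ea).
    exists (Rmin alp (x0 - p)). split. apply Rmin_glb_lt; lra.
    intros q Eq Hq. pose proof (Rmin_l alp (x0 - p)). pose proof (Rmin_r alp (x0 - p)).
    destruct Eq as [Iq|[[Ea' _]|[Eb' _]]].
    + rewrite ext_I by auto. apply H. split; auto. unfold dist; simpl; unfold R_dist. lra.
    + rewrite Ea in Ea'; inversion Ea'; subst. rewrite Rminus_diag, Rabs_R0; lra.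
    + pose proof (x0_b q Eb'). rewrite Rabs_right in Hq by lra. lra.
  - assert (HL := ext_spec f p (notI_b p Eb) (Hlb p Eb Hen)).
    destruct (HL eps He) as [alp [Halp H]].
    pose proof (x0_b p Eb).
    exists (Rmin alp (p - x0)). split. apply Rmin_glb_lt; lra.
    intros q Eq Hq. pose proof (Rmin_l alp (p - x0)). pose proof (Rmin_r alp (p - x0)).
    destruct Eq as [Iq|[[Ea' _]|[Eb' _]]].
    + rewrite ext_I by auto. apply H. split; auto. unfold dist; simpl; unfold R_dist. lra.
    + pose proof (x0_a q Ea'). rewrite Rabs_left in Hq by lra. lra.
    + rewrite Eb in Eb'; inversion Eb'; subst. rewrite Rminus_diag, Rabs_R0; lra.
Qed.
End ExtRC.


Local Notation Zx := (extv a b zt).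
Local Notation Gx := (extv a b gt).
Local Notation F := (F0 a b mu sigma x0 c0 c1).

Lemma za_lim' : forall a', a = Some a' -> attainable_a a b mu sigma x0 -> exists L, limit1_in zt I L a'.
Proof. exact za_lim. Qed.
Lemma zb_lim' : forall b', b = Some b' -> entrance_b a b mu sigma x0 -> exists L, limit1_in zt I L b'.
Proof. exact zb_lim. Qed.
Lemma ga_lim' : forall a', a = Some a' -> attainable_a a b mu sigma x0 -> exists L, limit1_in gt I L a'.
Proof. exact ga_lim. Qed.
Lemma gb_lim' : forall b', b = Some b' -> entrance_b a b mu sigma x0 -> exists L, limit1_in gt I L b'.
Proof. exact gb_lim. Qed.

Lemma Zx_lt y z : E y -> E z -> y < z -> Zx y < Zx z.
Proof. apply (ext_lt zt za_lim' zb_lim'). intros; apply z_lt; auto. Qed.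
Lemma Gx_le y z : E y -> E z -> y <= z -> Gx y <= Gx z.
Proof. apply (ext_le gt ga_lim' gb_lim'). intros; apply g_le; auto. Qed.
Lemma Zx_rc p : E p -> forall eps, 0 < eps -> exists d, 0 < d /\
  forall q, E q -> Rabs (q - p) < d -> Rabs (Zx q - Zx p) < eps.
Proof. apply (ext_rc zt za_lim' zb_lim'). exact z_cont. Qed.
Lemma Gx_rc p : E p -> forall eps, 0 < eps -> exists d, 0 < d /\
  forall q, E q -> Rabs (q - p) < d -> Rabs (Gx q - Gx p) < eps.
Proof. apply (ext_rc gt ga_lim' gb_lim'). exact g_cont. Qed.

Lemma F_fin y z c : y < z -> c1 y z = Fin c -> F y z = Fin ((c + Gx z - Gx y) / (Zx z - Zx y)).
Proof. intros H Hc. unfold F0. destruct (Rlt_dec y z); [|lra]. rewrite Hc. reflexivity. Qed.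
Lemma F_inf y z : y < z -> c1 y z = PInf -> F y z = PInf.
Proof. intros H Hc. unfold F0. destruct (Rlt_dec y z); [|lra]. rewrite Hc. reflexivity. Qed.
Lemma F_diag y z : ~ y < z -> F y z = PInf.
Proof. intros H. unfold F0. destruct (Rlt_dec y z); [lra|]. reflexivity. Qed.

Lemma k1_pos : 0 < k1.
Proof. destruct HB as [_ [_ [_ [_ [_ [_ [_ [_ [H _]]]]]]]]]. exact H. Qed.
Lemma c1_ge y z c : inRbar a b mu sigma x0 y z -> c1 y z = Fin c -> k1 <= c.
Proof.
  intros H Hc. destruct HB as [_ [_ [_ [_ [_ [_ [_ [_ [_ [Hk _]]]]]]]]]].
  specialize (Hk y z H). rewrite Hc in Hk. exact Hk.
Qed.
Lemma c1_cont y z : inRbar a b mu sigma x0 y z -> match c1 y z with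
     | Fin r => forall eps, 0 < eps -> exists del, 0 < del /\
          forall y' z', inRbar a b mu sigma x0 y' z' -> Rabs (y' - y) < del -> Rabs (z' - z) < del ->
            exists r', c1 y' z' = Fin r' /\ Rabs (r' - r) < eps
     | PInf => forall K, exists del, 0 < del /\
          forall y' z', inRbar a b mu sigma x0 y' z' -> Rabs (y' - y) < del -> Rabs (z' - z) < del ->
            Rbar_lt (Fin K) (c1 y' z')
     end.
Proof. intros H. destruct HB as [_ [_ [_ [_ [_ [_ [_ [_ [_ [_ [Hc _]]]]]]]]]]]. apply Hc; auto. Qed.

Lemma div_gt t N D : 0 < D -> t * D < N -> t < N / D.
Proof. intros HD H. apply Rmult_lt_reg_r with D; auto. unfold Rdiv. rewrite Rmult_assoc, Rinv_l, Rmult_1_r by lra. lra. Qed.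

Lemma F_pos y z v : inRbar a b mu sigma x0 y z -> F y z = Fin v -> 0 < v.
Proof.
  intros [Ey [Ez Hyz]] Hv. destruct (Rlt_dec y z) as [Hlt|Hn]; [|rewrite F_diag in Hv; auto; discriminate].
  destruct (c1 y z) as [c|] eqn:Ec; [|rewrite F_inf in Hv; auto; discriminate].
  rewrite (F_fin y z c Hlt Ec) in Hv. inversion Hv; subst.
  pose proof (c1_ge y z c (conj Ey (conj Ez Hyz)) Ec). pose proof k1_pos.
  pose proof (Zx_lt y z Ey Ez Hlt). pose proof (Gx_le y z Ey Ez Hyz).
  apply div_gt; lra.
Qed.

Lemma F_lt_nonpos y z t : inRbar a b mu sigma x0 y z -> t <= 0 -> Rbar_lt (Fin t) (F y z).
Proof.
  intros H Ht. destruct (F y z) as [v|] eqn:Ev; simpl; auto. pose proof (F_pos y z v H Ev). lra.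
Qed.

Lemma abs_tri3 x y z : Rabs (x - z) <= Rabs (x - y) + Rabs (y - z).
Proof. replace (x - z) with ((x - y) + (y - z)) by ring. apply Rabs_triang. Qed.

Lemma F_lsc y z : inRbar a b mu sigma x0 y z -> forall t, Rbar_lt (Fin t) (F y z) ->
  exists e, 0 < e /\ forall y' z', inRbar a b mu sigma x0 y' z' -> Rabs (y' - y) < e -> Rabs (z' - z) < e ->
  Rbar_lt (Fin t) (F y' z').
Proof.
  intros Hyz t Ht. destruct (Rle_dec t 0) as [Ht0|Ht0].
  { exists 1. split; [lra|]. intros. apply F_lt_nonpos; auto. }
  apply Rnot_le_lt in Ht0.
  pose proof Hyz as [Ey [Ez Hle]]. pose proof k1_pos as Hk1.
  destruct (Rlt_dec y z) as [Hlt|Hn].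
  2: {
    assert (z = y) by lra. subst z.
    set (eta := k1 / (2 * (t + 1))).
    assert (Heta : 0 < eta) by (unfold eta; apply Rdiv_lt_0_compat; lra).
    destruct (Zx_rc y Ey eta Heta) as [d [Hd HZ]].
    exists d. split; auto. intros y' z' H' Hy' Hz'.
    destruct (Rlt_dec y' z') as [Hlt'|Hn']; [|rewrite F_diag; simpl; auto].
    destruct H' as [Ey' [Ez' Hle']].
    destruct (c1 y' z') as [c|] eqn:Ec; [|rewrite F_inf; simpl; auto].
    rewrite (F_fin y' z' c Hlt' Ec). simpl.
    pose proof (c1_ge y' z' c (conj Ey' (conj Ez' Hle')) Ec).
    pose proof (Zx_lt y' z' Ey' Ez' Hlt'). pose proof (Gx_le y' z' Ey' Ez' Hle').
    assert (Q1 := HZ y' Ey' Hy'). assert (Q2 := HZ z' Ez' Hz').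
    assert (Zx z' - Zx y' < 2 * eta).
    { assert (Q3 := abs_tri3 (Zx z') (Zx y) (Zx y')). rewrite (Rabs_minus_sym (Zx y)) in Q3.
      pose proof (Rle_abs (Zx z' - Zx y')). lra. }
    apply div_gt. lra.
    assert (t * (2 * eta) < k1).
    { unfold eta. replace (t * (2 * (k1 / (2 * (t + 1))))) with (k1 * (t / (t + 1))) by (field; lra).
      assert (t / (t + 1) < 1) by (apply (Rmult_lt_reg_r (t + 1)); [lra|]; unfold Rdiv; rewrite Rmult_assoc, Rinv_l by lra; lra).
      nra. }
    nra. }
  pose proof (c1_cont y z Hyz) as Hc1.
  assert (HZy := Zx_rc y Ey). assert (HZz := Zx_rc z Ez). assert (HGy := Gx_rc y Ey). assert (HGz := Gx_rc z Ez).
  pose proof (Zx_lt y z Ey Ez Hlt) as HD.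
  destruct (c1 y z) as [c|] eqn:Ec.
  - rewrite (F_fin y z c Hlt Ec) in Ht. simpl in Ht.
    assert (HD' : 0 < Zx z - Zx y) by lra.
    set (D := Zx z - Zx y) in *. set (N := c + Gx z - Gx y) in *.
    assert (HtD : t * D < N).
    { apply Rmult_lt_compat_r with (r := D) in Ht; [|lra]. unfold Rdiv in Ht.
      rewrite Rmult_assoc, Rinv_l, Rmult_1_r in Ht by lra. lra. }
    set (e0 := Rmin (D / 2) ((N - t * D) / (2 * (1 + t)))).
    assert (He0 : 0 < e0) by (unfold e0; apply Rmin_glb_lt; [lra|apply Rdiv_lt_0_compat; lra]).
    assert (He0a : e0 <= D / 2) by apply Rmin_l.
    assert (He0b : e0 <= (N - t * D) / (2 * (1 + t))) by apply Rmin_r.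
    assert (He0b' : e0 * (1 + t) <= (N - t * D) / 2).
    { apply Rmult_le_compat_r with (r := 1 + t) in He0b; [|lra].
      replace ((N - t * D) / (2 * (1 + t)) * (1 + t)) with ((N - t * D) / 2) in He0b by (field; lra). exact He0b. }
    assert (He3 : 0 < e0 / 3) by lra.
    destruct (Hc1 _ He3) as [d1 [Hd1 Hc1']].
    destruct (HZy _ He3) as [d2 [Hd2 HZy']]. destruct (HZz _ He3) as [d3 [Hd3 HZz']].
    destruct (HGy _ He3) as [d4 [Hd4 HGy']]. destruct (HGz _ He3) as [d5 [Hd5 HGz']].
    set (e := Rmin (Rmin (Rmin d1 d2) (Rmin d3 d4)) (Rmin d5 ((z - y) / 2))).
    assert (Hes : e <= d1 /\ e <= d2 /\ e <= d3 /\ e <= d4 /\ e <= d5 /\ e <= (z - y) / 2).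
    { unfold e. pose proof (Rmin_l d1 d2). pose proof (Rmin_r d1 d2). pose proof (Rmin_l d3 d4). pose proof (Rmin_r d3 d4).
      pose proof (Rmin_l d5 ((z - y) / 2)). pose proof (Rmin_r d5 ((z - y) / 2)).
      pose proof (Rmin_l (Rmin d1 d2) (Rmin d3 d4)). pose proof (Rmin_r (Rmin d1 d2) (Rmin d3 d4)).
      pose proof (Rmin_l (Rmin (Rmin d1 d2) (Rmin d3 d4)) (Rmin d5 ((z - y) / 2))).
      pose proof (Rmin_r (Rmin (Rmin d1 d2) (Rmin d3 d4)) (Rmin d5 ((z - y) / 2))).
      repeat split; lra. }
    exists e. split. unfold e. repeat apply Rmin_glb_lt; lra.
    intros y' z' H' Hy' Hz'. destruct Hes as [E1 [E2 [E3 [E4 [E5 E6]]]]].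
    pose proof H' as [Ey' [Ez' Hle']].
    assert (Hlt' : y' < z') by (apply Rabs_def2 in Hy'; apply Rabs_def2 in Hz'; lra).
    destruct (Hc1' y' z' H' ltac:(lra) ltac:(lra)) as [r' [Er' Hr']].
    rewrite (F_fin y' z' r' Hlt' Er'). simpl.
    pose proof (HZy' y' Ey' ltac:(lra)). pose proof (HZz' z' Ez' ltac:(lra)).
    pose proof (HGy' y' Ey' ltac:(lra)). pose proof (HGz' z' Ez' ltac:(lra)).
    apply Rabs_def2 in Hr'. apply Rabs_def2 in H. apply Rabs_def2 in H0. apply Rabs_def2 in H1. apply Rabs_def2 in H2.
    apply div_gt. unfold D in *. lra.
    unfold D, N in *. nra.
  - set (U := Zx z - Zx y + 2).
    destruct (Hc1 (Rabs t * U + 1)) as [d1 [Hd1 Hc1']].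
    destruct (HZy 1 ltac:(lra)) as [d2 [Hd2 HZy']]. destruct (HZz 1 ltac:(lra)) as [d3 [Hd3 HZz']].
    set (e := Rmin (Rmin d1 d2) (Rmin d3 ((z - y) / 2))).
    assert (Hes : e <= d1 /\ e <= d2 /\ e <= d3 /\ e <= (z - y) / 2).
    { unfold e. pose proof (Rmin_l d1 d2). pose proof (Rmin_r d1 d2). pose proof (Rmin_l d3 ((z - y) / 2)). pose proof (Rmin_r d3 ((z - y) / 2)).
      pose proof (Rmin_l (Rmin d1 d2) (Rmin d3 ((z - y) / 2))). pose proof (Rmin_r (Rmin d1 d2) (Rmin d3 ((z - y) / 2))).
      repeat split; lra. }
    exists e. split. unfold e. repeat apply Rmin_glb_lt; lra.
    intros y' z' H' Hy' Hz'. destruct Hes as [E1 [E2 [E3 E6]]].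
    pose proof H' as [Ey' [Ez' Hle']].
    assert (Hlt' : y' < z') by (apply Rabs_def2 in Hy'; apply Rabs_def2 in Hz'; lra).
    specialize (Hc1' y' z' H' ltac:(lra) ltac:(lra)).
    destruct (c1 y' z') as [r'|] eqn:Er'; [|rewrite F_inf; simpl; auto].
    rewrite (F_fin y' z' r' Hlt' Er'). simpl in *.
    pose proof (HZy' y' Ey' ltac:(lra)). pose proof (HZz' z' Ez' ltac:(lra)).
    apply Rabs_def2 in H. apply Rabs_def2 in H0.
    pose proof (Zx_lt y' z' Ey' Ez' Hlt'). pose proof (Gx_le y' z' Ey' Ez' Hle').
    apply div_gt. lra.
    pose proof (Rle_abs t). pose proof (Rabs_pos t).
    assert (t * (Zx z' - Zx y') <= Rabs t * U) by (unfold U; nra).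
    lra.
Qed.


Lemma nat_not_att : natural_a a b mu sigma x0 -> ~ attainable_a a b mu sigma x0.
Proof. intros [H _] Hat. apply H, att_SigA, Hat. Qed.
Lemma natb_not_ent : natural_b a b mu sigma x0 -> ~ entrance_b a b mu sigma x0.
Proof. intros [_ H] Hen. apply H, ent_NB, Hen. Qed.
Lemma a_cases : attainable_a a b mu sigma x0 \/ natural_a a b mu sigma x0.
Proof. destruct HC as [[H|[H _]] _]; auto. Qed.
Lemma b_cases : entrance_b a b mu sigma x0 \/ natural_b a b mu sigma x0.
Proof. destruct HC as [_ [H|[H _]]]; auto. Qed.
Lemma a_some : ~ natural_a a b mu sigma x0 -> exists a', a = Some a'.
Proof.
  intros Hn. destruct a as [a'|] eqn:Ea. exists a'; auto.
  exfalso. apply Hn. destruct HA as [_ [_ [_ [_ [H _]]]]]. apply H; auto.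
Qed.
Lemma b_some : ~ natural_b a b mu sigma x0 -> exists b', b = Some b'.
Proof.
  intros Hn. destruct b as [b'|] eqn:Eb. exists b'; auto.
  exfalso. apply Hn. destruct HA as [_ [_ [_ [_ [_ H]]]]]. apply H; auto.
Qed.

Lemma rbar_between T c : Rbar_lt (Fin T) c -> exists K1 K2, T < K1 < K2 /\ Rbar_lt (Fin K2) c.
Proof.
  destruct c as [c|]; simpl; intros H.
  - exists (T + (c - T) / 3), (T + 2 * (c - T) / 3). simpl. lra.
  - exists (T + 1), (T + 2). simpl. lra.
Qed.

Lemma lim_c0_a K : natural_a a b mu sigma x0 -> Rbar_lt (Fin K) c0a ->
  exists w, I w /\ forall t, I t -> t <= w -> K <= c0 t.
Proof.
  intros Hn HK. destruct HB as [_ [_ [Hl _]]]. specialize (Hl Hn).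
  assert (Hnear : near_a a b (fun x => K < c0 x)).
  { destruct c0a as [c|]; simpl in *.
    - eapply (near_a_mono a b); [|apply (Hl (c - K)); lra]. intros x _ Hx. apply Rabs_def2 in Hx. lra.
    - apply Hl. }
  destruct Hnear as [w [Iw Hw]].
  destruct (near_a_below a b (fun x => x < w) w) as [w1 [Iw1 [_ Hw1]]]. exists w. split; auto. auto.
  exists w1. split; auto. intros t It Ht. left. apply Hw. apply It. lra.
Qed.

Lemma lim_c0_b K : natural_b a b mu sigma x0 -> Rbar_lt (Fin K) c0b ->
  exists w, I w /\ forall t, I t -> w <= t -> K <= c0 t.
Proof.
  intros Hn HK. destruct HB as [_ [_ [_ [Hl _]]]]. specialize (Hl Hn).
  assert (Hnear : near_b a b (fun x => K < c0 x)).
  { destruct c0b as [c|]; simpl in *.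
    - eapply (near_b_mono a b); [|apply (Hl (c - K)); lra]. intros x _ Hx. apply Rabs_def2 in Hx. lra.
    - apply Hl. }
  destruct Hnear as [w [Iw Hw]].
  destruct (near_b_above a b (fun x => w < x) w) as [w1 [Iw1 [_ Hw1]]]. exists w. split; auto. auto.
  exists w1. split; auto. intros t It Ht. left. apply Hw. lra. apply It.
Qed.

Lemma Rmin_I x y : I x -> I y -> I (Rmin x y).
Proof. intros; destruct (Rle_dec x y); [rewrite Rmin_left|rewrite Rmin_right]; auto; lra. Qed.
Lemma Rmax_I x y : I x -> I y -> I (Rmax x y).
Proof. intros; destruct (Rle_dec x y); [rewrite Rmax_right|rewrite Rmax_left]; auto; lra. Qed.

Lemma E_nat_a y : natural_a a b mu sigma x0 -> E y -> I y \/ (b = Some y /\ entrance_b a b mu sigma x0).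
Proof. intros Hn [H|[[_ H]|H]]; auto. exfalso; apply (nat_not_att Hn); auto. Qed.
Lemma E_nat_b y : natural_b a b mu sigma x0 -> E y -> I y \/ (a = Some y /\ attainable_a a b mu sigma x0).
Proof. intros Hn [H|[H|[_ H]]]; auto. exfalso; apply (natb_not_ent Hn); auto. Qed.


Lemma Zx_I p : I p -> Zx p = zt p.
Proof. apply ext_I. Qed.
Lemma Gx_I p : I p -> Gx p = gt p.
Proof. apply ext_I. Qed.

Lemma tail_a T : 0 < T -> natural_a a b mu sigma x0 -> Rbar_lt (Fin T) c0a ->
  (natural_b a b mu sigma x0 -> Rbar_lt (Fin T) c0b) ->
  exists al, I al /\ forall y z, inRbar a b mu sigma x0 y z -> y < al -> Rbar_lt (Fin T) (F y z).
Proof.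
  intros HT Hna HTa HTb.
  destruct (rbar_between T c0a HTa) as [K1 [K1h [[HK1 HK1x] HK1h]]].
  assert (HK2 : exists K2, T < K2 /\ (natural_b a b mu sigma x0 -> exists w, I w /\ forall t, I t -> w <= t -> K2 <= c0 t)).
  { destruct (classic (natural_b a b mu sigma x0)) as [Hnb|Hnb].
    - destruct (rbar_between T c0b (HTb Hnb)) as [K2 [K2h [[HK2 HK2x] HK2h]]].
      exists K2. split. lra. intros _. destruct (lim_c0_b K2h Hnb HK2h) as [w [Iw Hw]].
      exists w. split; auto. intros t It Ht. specialize (Hw t It Ht). lra.
    - exists K1. split. lra. tauto. }
  destruct HK2 as [K2 [HK2 HK2c]].
  set (K' := Rmin K1 K2).
  assert (HK' : T < K' /\ K' <= K1 /\ K' <= K2) by (unfold K'; split; [apply Rmin_glb_lt; lra|split; [apply Rmin_l|apply Rmin_r]]).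
  destruct (lim_c0_a K1h Hna HK1h) as [w1 [Iw1 Hw1]].
  assert (HKp : 0 < K') by lra. assert (HKK : K' < K1h) by lra.
  destruct (a_nat_g K' HKp (proj1 Hna) (ex_intro _ K1h (ex_intro _ w1 (conj HKK (conj Iw1 Hw1)))))
    as [wa [Iwa PA]].
  assert (HCC : exists C, 0 <= C /\ forall y z, I y -> y <= wa -> E z -> y < z -> K' * (Zx z - zt y - C) <= Gx z - gt y).
  { destruct b_cases as [Hen|Hnb].
    - assert (Hnb : ~ natural_b a b mu sigma x0) by (intros Hnb; exact (natb_not_ent Hnb Hen)).
      destruct (b_some Hnb) as [b' Eb].
      assert (Eb' : E b') by (right; right; auto).
      exists (Zx b' - zt wa). split.
      { pose proof (Zx_lt wa b' (I_E wa Iwa) Eb' ltac:(apply (I_b b' wa Eb) in Iwa; lra)). rewrite Zx_I in H by auto. lra. }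
      intros y z Iy Hy Ez Hyz.
      assert (Zzb : Zx z <= Zx b').
      { destruct (Req_dec z b') as [->|Hne]; [lra|]. left. apply Zx_lt; auto.
        destruct (E_nat_a z Hna Ez) as [Iz|[Eb2 _]]. apply (I_b b' z Eb) in Iz; lra. rewrite Eb in Eb2; inversion Eb2; lra. }
      destruct (Rle_dec z wa) as [Hzw|Hzw].
      + assert (Iz : I z).
        { destruct (E_nat_a z Hna Ez) as [Iz|[Eb2 _]]; auto. rewrite Eb in Eb2. injection Eb2 as Hz.
          apply (I_b b' wa Eb) in Iwa. lra. }
        rewrite Zx_I, Gx_I by auto. pose proof (PA y z Iy Iz ltac:(lra)).
        pose proof (Zx_lt wa b' (I_E wa Iwa) Eb' ltac:(apply (I_b b' wa Eb) in Iwa; lra)). rewrite Zx_I in H0 by auto.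
        pose proof (z_le z wa Iz Iwa Hzw). nra.
      + pose proof (Gx_le wa z (I_E wa Iwa) Ez ltac:(lra)). rewrite Gx_I in H by auto.
        pose proof (PA y wa Iy Iwa ltac:(lra)). nra.
    - destruct (HK2c Hnb) as [wc [Iwc Hwc]].
      destruct (b_nat_g K' (ex_intro _ wc (conj Iwc (fun t It Ht => Rle_trans _ _ _ (proj2 (proj2 HK')) (Hwc t It Ht))))) as [wb0 [Iwb0 PB]].
      set (wb := Rmax wa wb0).
      assert (Iwb : I wb) by (apply Rmax_I; auto).
      assert (Hwb1 : wa <= wb) by apply Rmax_l. assert (Hwb2 : wb0 <= wb) by apply Rmax_r.
      exists (zt wb - zt wa). split. pose proof (z_le wa wb Iwa Iwb Hwb1). lra.
      intros y z Iy Hy Ez Hyz.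
      assert (Iz : I z).
      { destruct (E_nat_a z Hna Ez) as [Iz|[_ Hen]]; auto. exfalso; exact (natb_not_ent Hnb Hen). }
      rewrite Zx_I, Gx_I by auto.
      destruct (Rle_dec z wa) as [Hzw|Hzw].
      + pose proof (PA y z Iy Iz ltac:(lra)). pose proof (z_le wa wb Iwa Iwb Hwb1). nra.
      + destruct (Rle_dec z wb) as [Hzb|Hzb].
        * pose proof (g_le wa z Iwa Iz ltac:(lra)). pose proof (PA y wa Iy Iwa ltac:(lra)).
          pose proof (z_le z wb Iz Iwb Hzb). nra.
        * pose proof (PB wb z Iwb Iz ltac:(lra)). pose proof (PA y wa Iy Iwa ltac:(lra)).
          pose proof (g_le wa wb Iwa Iwb Hwb1). nra. }
  destruct HCC as [C [HC0 HCC]].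
  destruct (a_nat_z (proj1 Hna) (zt wa - K' * C / (K' - T))) as [w3 [Iw3 [_ Hw3]]].
  exists (Rmin w3 wa). split. apply Rmin_I; auto.
  intros y z Hyz Hyal. pose proof (Rmin_l w3 wa). pose proof (Rmin_r w3 wa).
  pose proof Hyz as [Ey [Ez Hle]].
  assert (Iy : I y).
  { destruct (E_nat_a y Hna Ey) as [Iy|[Eb _]]; auto. pose proof (Rmin_I w3 wa Iw3 Iwa) as Ia.
    apply (I_b y _ Eb) in Ia. lra. }
  destruct (Rlt_dec y z) as [Hlt|Hn]; [|rewrite F_diag; simpl; auto].
  destruct (c1 y z) as [c|] eqn:Ec; [|rewrite F_inf; simpl; auto].
  rewrite (F_fin y z c Hlt Ec). simpl. rewrite (Zx_I y Iy), (Gx_I y Iy).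
  pose proof (c1_ge y z c Hyz Ec). pose proof k1_pos.
  pose proof (Zx_lt y z Ey Ez Hlt). rewrite (Zx_I y Iy) in H3.
  apply div_gt. lra.
  destruct (Rle_dec z wa) as [Hzw|Hzw].
  - assert (Iz : I z).
    { destruct (E_nat_a z Hna Ez) as [Iz|[Eb _]]; auto. apply (I_b z wa Eb) in Iwa. lra. }
    rewrite (Zx_I z Iz), (Gx_I z Iz) in *. pose proof (PA y z Iy Iz ltac:(lra)).
    assert (0 < (K' - T) * (zt z - zt y)) by (apply Rmult_lt_0_compat; lra). nra.
  - pose proof (HCC y z Iy ltac:(lra) Ez Hlt).
    pose proof (Zx_lt wa z (I_E wa Iwa) Ez ltac:(lra)). rewrite Zx_I in H5 by auto.
    pose proof (Hw3 y Iy ltac:(lra)).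
    assert (Hq : K' * C / (K' - T) * (K' - T) = K' * C) by (field; lra).
    assert ((K' - T) * (Zx z - zt y) > K' * C).
    { apply Rle_lt_trans with ((K' - T) * (K' * C / (K' - T))). lra.
      apply Rmult_lt_compat_l; lra. }
    nra.
Qed.


Lemma tail_b T : 0 < T -> natural_b a b mu sigma x0 -> Rbar_lt (Fin T) c0b ->
  (natural_a a b mu sigma x0 -> Rbar_lt (Fin T) c0a) ->
  exists de, I de /\ forall y z, inRbar a b mu sigma x0 y z -> de < z -> Rbar_lt (Fin T) (F y z).
Proof.
  intros HT Hnb HTb HTa.
  destruct (rbar_between T c0b HTb) as [K2 [K2h [[HK2 HK2x] HK2h]]].
  assert (HK1 : exists K1, T < K1 /\ (natural_a a b mu sigma x0 -> exists K1h w, K1 < K1h /\ I w /\ forall t, I t -> t <= w -> K1h <= c0 t)).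
  { destruct (classic (natural_a a b mu sigma x0)) as [Hna|Hna].
    - destruct (rbar_between T c0a (HTa Hna)) as [K1 [K1h [[HK1 HK1x] HK1h]]].
      exists K1. split. lra. intros _. destruct (lim_c0_a K1h Hna HK1h) as [w [Iw Hw]].
      exists K1h, w. split; auto.
    - exists K2. split. lra. tauto. }
  destruct HK1 as [K1 [HK1 HK1c]].
  set (K' := Rmin K1 K2).
  assert (HK' : T < K' /\ K' <= K1 /\ K' <= K2) by (unfold K'; split; [apply Rmin_glb_lt; lra|split; [apply Rmin_l|apply Rmin_r]]).
  destruct (lim_c0_b K2h Hnb HK2h) as [w1 [Iw1 Hw1]].
  assert (Hw1' : forall t, I t -> w1 <= t -> K' <= c0 t) by (intros t It Ht; specialize (Hw1 t It Ht); lra).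
  destruct (b_nat_g K' (ex_intro _ w1 (conj Iw1 Hw1'))) as [wb [Iwb PB]].
  assert (HCC : exists C, 0 <= C /\ forall y z, I z -> wb <= z -> E y -> y < z -> y < wb -> K' * (zt z - Zx y - C) <= gt z - Gx y).
  { destruct a_cases as [Hat|Hna].
    - assert (Hna : ~ natural_a a b mu sigma x0) by (intros Hna; exact (nat_not_att Hna Hat)).
      destruct (a_some Hna) as [a' Ea].
      assert (Ea' : E a') by (right; left; auto).
      exists (zt wb - Zx a'). split.
      { pose proof (Zx_lt a' wb Ea' (I_E wb Iwb) ltac:(apply (I_a a' wb Ea) in Iwb; lra)). rewrite (Zx_I wb Iwb) in H. lra. }
      intros y z Iz Hz Ey Hyz Hyw.
      pose proof (PB wb z Iwb Iz ltac:(lra)).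
      destruct (E_nat_b y Hnb Ey) as [Iy|[Ea2 _]].
      + rewrite (Zx_I y Iy), (Gx_I y Iy). pose proof (g_le y wb Iy Iwb ltac:(lra)).
        pose proof (Zx_lt a' y Ea' Ey ltac:(apply (I_a a' y Ea) in Iy; lra)). rewrite (Zx_I y Iy) in H1.
        assert (HK0 : 0 < K') by lra. nra.
      + rewrite Ea in Ea2. injection Ea2 as Hy. subst y.
        pose proof (Gx_le a' wb Ea' (I_E wb Iwb) ltac:(lra)). rewrite (Gx_I wb Iwb) in H0.
        assert (HK0 : 0 < K') by lra. nra.
    - destruct (HK1c Hna) as [K1h [wa0 [HKh [Iwa0 Hwa0]]]].
      assert (HKp : 0 < K') by lra. assert (HKK : K' < K1h) by lra.
      destruct (a_nat_g K' HKp (proj1 Hna) (ex_intro _ K1h (ex_intro _ wa0 (conj HKK (conj Iwa0 Hwa0))))) as [wa1 [Iwa1 PA]].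
      set (wa := Rmin wa1 wb).
      assert (Iwa : I wa) by (apply Rmin_I; auto).
      assert (Hwa1 : wa <= wa1) by apply Rmin_l. assert (Hwa2 : wa <= wb) by apply Rmin_r.
      exists (zt wb - zt wa). split. pose proof (z_le wa wb Iwa Iwb Hwa2). lra.
      intros y z Iz Hz Ey Hyz Hyw.
      assert (Iy : I y).
      { destruct (E_nat_b y Hnb Ey) as [Iy|[_ Hat]]; auto. exfalso; exact (nat_not_att Hna Hat). }
      rewrite (Zx_I y Iy), (Gx_I y Iy).
      pose proof (PB wb z Iwb Iz ltac:(lra)).
      destruct (Rle_dec wa y) as [Hwy|Hwy].
      + pose proof (g_le y wb Iy Iwb ltac:(lra)). pose proof (z_le wa y Iwa Iy Hwy). nra.
      + pose proof (PA y wa Iy Iwa ltac:(lra)). pose proof (g_le wa wb Iwa Iwb Hwa2). nra. }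
  destruct HCC as [C [HC0 HCC]].
  destruct (b_nat_z (proj2 Hnb) (zt wb + K' * C / (K' - T))) as [w3 [Iw3 [_ Hw3]]].
  exists (Rmax w3 wb). split. apply Rmax_I; auto.
  intros y z Hyz Hzde. pose proof (Rmax_l w3 wb). pose proof (Rmax_r w3 wb).
  pose proof Hyz as [Ey [Ez Hle]].
  assert (Iz : I z).
  { destruct (E_nat_b z Hnb Ez) as [Iz|[Ea _]]; auto. pose proof (Rmax_I w3 wb Iw3 Iwb) as Ia.
    apply (I_a z _ Ea) in Ia. lra. }
  destruct (Rlt_dec y z) as [Hlt|Hn]; [|rewrite F_diag; simpl; auto].
  destruct (c1 y z) as [c|] eqn:Ec; [|rewrite F_inf; simpl; auto].
  rewrite (F_fin y z c Hlt Ec). simpl. rewrite (Zx_I z Iz), (Gx_I z Iz).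
  pose proof (c1_ge y z c Hyz Ec). pose proof k1_pos.
  pose proof (Zx_lt y z Ey Ez Hlt). rewrite (Zx_I z Iz) in H3.
  apply div_gt. lra.
  destruct (Rle_dec wb y) as [Hwy|Hwy].
  - assert (Iy : I y) by (apply (I_between a b wb z); auto; lra).
    rewrite (Zx_I y Iy), (Gx_I y Iy) in *. pose proof (PB y z Iy Iz ltac:(lra)).
    assert (0 < (K' - T) * (zt z - zt y)) by (apply Rmult_lt_0_compat; lra). nra.
  - pose proof (HCC y z Iz ltac:(lra) Ey Hlt ltac:(lra)).
    pose proof (Zx_lt y wb Ey (I_E wb Iwb) ltac:(lra)). rewrite (Zx_I wb Iwb) in H5.
    pose proof (Hw3 z Iz ltac:(lra)).
    assert (Hq : K' * C / (K' - T) * (K' - T) = K' * C) by (field; lra).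
    assert ((K' - T) * (zt z - Zx y) > K' * C).
    { apply Rle_lt_trans with ((K' - T) * (K' * C / (K' - T))). lra.
      apply Rmult_lt_compat_l; lra. }
    nra.
Qed.


Lemma E_ge_a a' y : a = Some a' -> E y -> a' <= y.
Proof.
  intros Ea [Iy|[[Ea2 _]|[Eb _]]].
  - apply (I_a a' y Ea) in Iy. lra.
  - rewrite Ea in Ea2. injection Ea2 as H. lra.
  - pose proof (ab_lt a' y Ea Eb). lra.
Qed.
Lemma E_le_b b' y : b = Some b' -> E y -> y <= b'.
Proof.
  intros Eb [Iy|[[Ea _]|[Eb2 _]]].
  - apply (I_b b' y Eb) in Iy. lra.
  - pose proof (ab_lt y b' Ea Eb). lra.
  - rewrite Eb in Eb2. injection Eb2 as H. lra.
Qed.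

Lemma rbar_down r r' c : Rbar_lt (Fin r) c -> r' <= r -> Rbar_lt (Fin r') c.
Proof. destruct c; simpl; auto. lra. Qed.

Lemma main_sec : exists y0 z0, inRr a b mu sigma x0 y0 z0 /\
  forall y z, inRbar a b mu sigma x0 y z -> Rbar_le (F y0 z0) (F y z).
Proof.
  destruct (classic (exists y z r, inRr a b mu sigma x0 y z /\ F y z = Fin r)) as [Hfin|Hnone].
  2: { assert (Hall : forall y z, inRbar a b mu sigma x0 y z -> F y z = PInf).
       { intros y z [Ey [Ez Hle]]. destruct (F y z) as [r|] eqn:Er; auto.
         exfalso. apply Hnone. destruct (Rlt_dec y z) as [Hlt|Hn]; [|rewrite F_diag in Er; auto; discriminate].
         exists y, z, r. split; [split; [exact Ey|split; [exact Ez|exact Hlt]]|exact Er]. }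
       destruct (ex_pt_above x0 Ix0) as [z1 [Iz1 Hz1]].
       exists x0, z1. split. split; [apply I_E, Ix0|split; [apply I_E; auto|auto]].
       intros y z Hyz. rewrite (Hall y z Hyz). destruct (F x0 z1); simpl; auto. }
  assert (HWa : exists y z r, inRr a b mu sigma x0 y z /\ F y z = Fin r /\ (natural_a a b mu sigma x0 -> Rbar_lt (Fin r) c0a)).
  { destruct (classic (natural_a a b mu sigma x0)) as [Hna|Hna].
    - destruct HC as [[Hat|[_ [Hinf|[c [Ec [_ [yh [zh [Hh Fh]]]]]]]]] _].
      + exfalso; exact (nat_not_att Hna Hat).
      + destruct Hfin as [y [z [r [H1 H2]]]]. exists y, z, r. rewrite Hinf. simpl. auto.
      + destruct (F yh zh) as [rh|] eqn:Eh; [|simpl in Fh; contradiction].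
        exists yh, zh, rh. split; auto. split; auto. rewrite Ec. simpl in *. auto.
    - destruct Hfin as [y [z [r [H1 H2]]]]. exists y, z, r. split; auto. split; auto. tauto. }
  assert (HWb : exists y z r, inRr a b mu sigma x0 y z /\ F y z = Fin r /\ (natural_b a b mu sigma x0 -> Rbar_lt (Fin r) c0b)).
  { destruct (classic (natural_b a b mu sigma x0)) as [Hnb|Hnb].
    - destruct HC as [_ [Hen|[_ [Hinf|[c [Ec [_ [yh [zh [Hh Fh]]]]]]]]]].
      + exfalso; exact (natb_not_ent Hnb Hen).
      + destruct Hfin as [y [z [r [H1 H2]]]]. exists y, z, r. rewrite Hinf. simpl. auto.
      + destruct (F yh zh) as [rh|] eqn:Eh; [|simpl in Fh; contradiction].
        exists yh, zh, rh. split; auto. split; auto. rewrite Ec. simpl in *. auto.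
    - destruct Hfin as [y [z [r [H1 H2]]]]. exists y, z, r. split; auto. split; auto. tauto. }
  assert (HW : exists y z r, inRr a b mu sigma x0 y z /\ F y z = Fin r /\
     (natural_a a b mu sigma x0 -> Rbar_lt (Fin r) c0a) /\ (natural_b a b mu sigma x0 -> Rbar_lt (Fin r) c0b)).
  { destruct HWa as [ya [za [ra [Ha1 [Ha2 Ha3]]]]]. destruct HWb as [yb [zb [rb [Hb1 [Hb2 Hb3]]]]].
    destruct (Rle_dec ra rb).
    - exists ya, za, ra. split; [exact Ha1|split; [exact Ha2|split; [exact Ha3|intros Hnb; apply (rbar_down rb); auto]]].
    - exists yb, zb, rb. split; [exact Hb1|split; [exact Hb2|split; [intros Hna; apply (rbar_down ra); auto; lra|exact Hb3]]]. }
  destruct HW as [yw [zw [rw [Hw1 [Hw2 [Hw3 Hw4]]]]]].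
  assert (Hrw : 0 < rw).
  { destruct Hw1 as [A [B C]]. apply (F_pos yw zw rw); auto. split; auto. split; auto. lra. }
  assert (HT : exists T, rw < T /\ (natural_a a b mu sigma x0 -> Rbar_lt (Fin T) c0a) /\ (natural_b a b mu sigma x0 -> Rbar_lt (Fin T) c0b)).
  { assert (Ea : exists ea, 0 < ea /\ (natural_a a b mu sigma x0 -> Rbar_lt (Fin (rw + ea)) c0a)).
    { destruct (classic (natural_a a b mu sigma x0)) as [Hna|Hna]; [|exists 1; split; [lra|tauto]].
      specialize (Hw3 Hna). destruct c0a as [c|]; simpl in *.
      - exists ((c - rw) / 2). split. lra. intros; lra.
      - exists 1. split; auto. lra. }
    assert (Eb : exists eb, 0 < eb /\ (natural_b a b mu sigma x0 -> Rbar_lt (Fin (rw + eb)) c0b)).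
    { destruct (classic (natural_b a b mu sigma x0)) as [Hnb|Hnb]; [|exists 1; split; [lra|tauto]].
      specialize (Hw4 Hnb). destruct c0b as [c|]; simpl in *.
      - exists ((c - rw) / 2). split. lra. intros; lra.
      - exists 1. split; auto. lra. }
    destruct Ea as [ea [Hea Ha]]. destruct Eb as [eb [Heb Hb]].
    exists (rw + Rmin ea eb). pose proof (Rmin_l ea eb). pose proof (Rmin_r ea eb).
    split. assert (0 < Rmin ea eb) by (apply Rmin_glb_lt; lra). lra.
    split; intros H'. apply (rbar_down (rw + ea)); auto; lra. apply (rbar_down (rw + eb)); auto; lra. }
  destruct HT as [T [HT1 [HT2 HT3]]].
  assert (Hal : exists al, E al /\ (forall x, al < x -> gtA a x) /\
     forall y z, inRbar a b mu sigma x0 y z -> Rbar_le (F y z) (Fin T) -> al <= y).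
  { destruct a_cases as [Hat|Hna].
    - assert (Hna : ~ natural_a a b mu sigma x0) by (intros Hna; exact (nat_not_att Hna Hat)).
      destruct (a_some Hna) as [a' Ea]. exists a'. split. right; left; auto. split.
      + intros x Hx. unfold gtA. rewrite Ea. exact Hx.
      + intros y z [Ey _] _. apply (E_ge_a a' y Ea Ey).
    - destruct (tail_a T ltac:(lra) Hna (HT2 Hna) HT3) as [al [Ial Hal]]. exists al. split. apply I_E; auto. split.
      + intros x Hx. apply (gtA_mono a al); [apply Ial|lra].
      + intros y z Hyz HF. apply Rnot_lt_le. intros Hlt. specialize (Hal y z Hyz Hlt).
        destruct (F y z); simpl in *; lra. }
  assert (Hde : exists de, E de /\ (forall x, x < de -> ltB b x) /\
     forall y z, inRbar a b mu sigma x0 y z -> Rbar_le (F y z) (Fin T) -> z <= de).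
  { destruct b_cases as [Hen|Hnb].
    - assert (Hnb : ~ natural_b a b mu sigma x0) by (intros Hnb; exact (natb_not_ent Hnb Hen)).
      destruct (b_some Hnb) as [b' Eb]. exists b'. split. right; right; auto. split.
      + intros x Hx. unfold ltB. rewrite Eb. exact Hx.
      + intros y z [_ [Ez _]] _. apply (E_le_b b' z Eb Ez).
    - destruct (tail_b T ltac:(lra) Hnb (HT3 Hnb) HT2) as [de [Ide Hde]]. exists de. split. apply I_E; auto. split.
      + intros x Hx. apply (ltB_mono b de); [apply Ide|lra].
      + intros y z Hyz HF. apply Rnot_lt_le. intros Hlt. specialize (Hde y z Hyz Hlt).
        destruct (F y z); simpl in *; lra. }
  destruct Hal as [al [Eal [Hal1 Hal2]]]. destruct Hde as [de [Ede [Hde1 Hde2]]].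
  destruct (min_lemma E F T al de) as [y0 [z0 [D0 Hmin]]].
  - intros x [Hx1 Hx2]. destruct (Req_dec x al) as [->|Hn1]; auto. destruct (Req_dec x de) as [->|Hn2]; auto.
    apply I_E. split; [apply Hal1|apply Hde1]; lra.
  - intros y z Hyz HF. split; [apply (Hal2 y z)|apply (Hde2 y z)]; auto.
  - intros y z r Hyz Hr. left. apply (F_pos y z r); auto.
  - intros y z Hyz _ _ t Ht. apply F_lsc; auto.
  - exists yw, zw. destruct Hw1 as [A [B C]]. split. split; auto. split; auto. lra. rewrite Hw2. simpl. lra.
  - exists y0, z0. split.
    + destruct D0 as [A [B C]]. split; auto. split; auto.
      destruct (Rlt_dec y0 z0) as [Hlt|Hn]; auto. exfalso.
      assert (Dw : inRbar a b mu sigma x0 yw zw) by (destruct Hw1 as [P [Q R']]; split; auto; split; auto; lra).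
      specialize (Hmin yw zw Dw). rewrite F_diag in Hmin by auto. rewrite Hw2 in Hmin. simpl in Hmin. exact Hmin.
    + exact Hmin.
Qed.

End Main.


Theorem theorem4p7
  (a b : option R) (mu sigma : R -> R) (x0 : R) (refl : Prop)
  (c0 : R -> R) (c0a c0b : Rbar) (c1 : R -> R -> Rbar) (k1 : R)
  (Hset : setting a b mu sigma x0)
  (HA : condA a b mu sigma x0 refl)
  (HB : condB a b mu sigma x0 refl c0 c0a c0b c1 k1)
  (HC : condC a b mu sigma x0 c0 c0a c0b c1) :
  exists y0 z0, inRr a b mu sigma x0 y0 z0 /\
    forall y z, inRbar a b mu sigma x0 y z ->
      Rbar_le (F0 a b mu sigma x0 c0 c1 y0 z0) (F0 a b mu sigma x0 c0 c1 y z).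
Proof.
  exact (main_sec a b mu sigma x0 refl c0 c0a c0b c1 k1 Hset HA HB HC).
Qed.
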